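(* Let $n\ge5$ and $\lambda\in\mathbb{R}$. The intrinsic $\mathrm{RMG}_\lambda$ flow on $({\sf Rat}_n^{eq},\gamma^{eq}_{L^2})$ is incomplete: there exist initial data $x\in{\sf Rat}_n^{eq}$, $v\in T_x{\sf Rat}_n^{eq}$ whose $\mathrm{RMG}_\lambda$ curve cannot be extended to all times $t\in\mathbb{R}$ within ${\sf Rat}_n^{eq}$.
   Context: ${\sf Rat}_n$ is the space of degree $n$ rational maps $W:S^2\to S^2$, a complex manifold via $W=\frac{a_0+\dots+a_nz^n}{b_0+\dots+b_nz^n}\mapsto[a_0,\dots,a_n,b_0,\dots,b_n]\in\mathbb{C}P^{2n+1}$, with the $L^2$ metric $\gamma_{L^2}(\dot W,\dot W)=16\int_{\mathbb{C}}\frac{|\dot W(z)|^2}{(1+|W(z)|^2)^2}\frac{dx\,dy}{(1+|z|^2)^2}$ ($z=x+iy$), which is Kähler. ${\sf Rat}_n^{eq}=\{W(z)=cz^n:c\in\mathbb{C}^\times\}\cong\mathbb{C}^\times$ is a complex curve in ${\sf Rat}_n$ (the fixed point set of the circle of holomorphic isometries $W(z)\mapsto e^{in\alpha}W(e^{-i\alpha}z)$), and $\gamma^{eq}_{L^2}$ is the induced metric. The intrinsic RMG flow is the RMG flow of $({\sf Rat}_n^{eq},\gamma^{eq}_{L^2})$ regarded as a Kähler manifold in its own right: for a Kähler manifold with Ricci form $\rho(X,Y)=\mathrm{Ric}(JX,Y)$, a curve $\alpha$ is $\mathrm{RMG}_\lambda$ if $\nabla^\alpha_{d/dt}\dot\alpha=\lambda\,\sharp\,\iota_{\dot\alpha}\rho$.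 *)

(* Defs.v *)
From Stdlib Require Import Reals Lra ClassicalEpsilon.
Open Scope R_scope.

(* Derivative of a real function at a point, as a total function
   (chosen by Hilbert epsilon; it is the derivative whenever f is
   differentiable at x, since the derivative is then unique). *)
Definition Der (f : R -> R) (x : R) : R :=
  epsilon (inhabits 0) (fun l => derivable_pt_lim f x l).

Definition d_u (f : R -> R -> R) : R -> R -> R :=
  fun u v => Der (fun s => f s v) u.
Definition d_v (f : R -> R -> R) : R -> R -> R :=
  fun u v => Der (fun s => f u s) v.

Definition is_imp_int0 (f : R -> R) (l : R) : Prop :=
  (forall b, 0 <= b -> inhabited (Riemann_integrable f 0 b)) /\
  (forall eps, 0 < eps -> exists B, forall b (pr : Riemann_integrable f 0 b),
      B <= b -> Rabs (RiemannInt pr - l) < eps).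

Definition ImpInt0 (f : R -> R) : R :=
  epsilon (inhabits 0) (is_imp_int0 f).

(* Coordinates on Rat_n^eq = { c z^n : c in C^x } : c = u + i v, (u,v) <> 0.
   For W = c z^n and Wdot = cdot z^n,
     gamma_L2(Wdot,Wdot) = 16 int_C |cdot|^2 |z|^(2n) /
                            ((1+|c|^2|z|^(2n))^2 (1+|z|^2)^2) dx dy
                         = conf n u v * |cdot|^2,
   where (polar coordinates z = rho e^{i theta})
     conf n u v = 32 pi int_0^oo rho^(2n+1) /
                   ((1+(u^2+v^2) rho^(2n))^2 (1+rho^2)^2) d rho.          *)
Definition conf (n : nat) (u v : R) : R :=
  32 * PI * ImpInt0 (fun p => p ^ (2 * n + 1) /
                               ((1 + (u ^ 2 + v ^ 2) * p ^ (2 * n)) ^ 2 * (1 + p ^ 2) ^ 2)).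

(* Gaussian curvature of the conformal metric G (du^2 + dv^2):
   K = - Laplacian(ln G) / (2 G).  On a Kaehler curve Ric = K g,
   so the Ricci form is rho = K omega. *)
Definition lnconf (n : nat) : R -> R -> R := fun u v => ln (conf n u v).

Definition gauss_K (n : nat) (u v : R) : R :=
  - (d_u (d_u (lnconf n)) u v + d_v (d_v (lnconf n)) u v) / (2 * conf n u v).

(* Covariant acceleration nabla_{d/dt} alpha-dot of the Levi-Civita
   connection of G (du^2+dv^2), at position (u,v), velocity (u1,v1),
   coordinate acceleration (u2,v2). Christoffel symbols:
   G^u_uu = G_u/2G, G^u_uv = G_v/2G, G^u_vv = -G_u/2G,
   G^v_vv = G_v/2G, G^v_uv = G_u/2G, G^v_uu = -G_v/2G. *)
Definition cov_acc_u (n : nat) (u v u1 v1 u2 v2 : R) : R :=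
  u2 + (d_u (conf n) u v * u1 ^ 2 + 2 * d_v (conf n) u v * u1 * v1
        - d_u (conf n) u v * v1 ^ 2) / (2 * conf n u v).
Definition cov_acc_v (n : nat) (u v u1 v1 u2 v2 : R) : R :=
  v2 + (d_v (conf n) u v * v1 ^ 2 + 2 * d_u (conf n) u v * u1 * v1
        - d_v (conf n) u v * u1 ^ 2) / (2 * conf n u v).

(* RMG_lambda equation: nabla_{d/dt} alpha-dot = lambda # iota_{alpha-dot} rho.
   With rho(X,Y) = Ric(JX,Y) = K g(JX,Y) we get # iota_{alpha-dot} rho
   = K J alpha-dot, and J(u1,v1) = (-v1,u1) (multiplication by i on c). *)
Definition RMG_eq (n : nat) (lam : R) (u v u1 v1 u2 v2 : R) : Prop :=
  cov_acc_u n u v u1 v1 u2 v2 = lam * gauss_K n u v * (- v1) /\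
  cov_acc_v n u v u1 v1 u2 v2 = lam * gauss_K n u v * u1.

Definition global_RMG_curve (n : nat) (lam x0 y0 vx vy : R) : Prop :=
  exists u v u1 v1 u2 v2 : R -> R,
    u 0 = x0 /\ v 0 = y0 /\ u1 0 = vx /\ v1 0 = vy /\
    (forall t, u t <> 0 \/ v t <> 0) /\
    (forall t, derivable_pt_lim u t (u1 t) /\ derivable_pt_lim v t (v1 t) /\
               derivable_pt_lim u1 t (u2 t) /\ derivable_pt_lim v1 t (v2 t)) /\
    (forall t, RMG_eq n lam (u t) (v t) (u1 t) (v1 t) (u2 t) (v2 t)).

(* Main.v *)
Require Import Defs.
From Stdlib Require Import Reals Lra Lia ClassicalEpsilon.
From Coquelicot Require Import Coquelicot.
Open Scope R_scope.

Lemma mono_lim (g : R -> R) (M : R) :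
  (forall a b, 0 <= a -> a <= b -> g a <= g b) -> (forall b, 0 <= b -> g b <= M) ->
  exists m, forall eps, 0 < eps -> exists B, forall b, B <= b -> Rabs (g b - m) < eps.
Proof.
  intros Hm HM.
  set (E := fun y => exists b, 0 <= b /\ y = g b).
  assert (HB : bound E) by (exists M; intros y [b [Hb ->]]; auto).
  assert (HE : exists y, E y) by (exists (g 0); exists 0; split; [lra|auto]).
  destruct (completeness E HB HE) as [m [Hub Hlub]].
  exists m; intros eps Heps.
  assert (exists b0, 0 <= b0 /\ m - eps < g b0) as [b0 [Hb0 Hg0]].
  { apply Classical_Prop.NNPP; intro Hn.
    assert (m <= m - eps); [|lra].
    apply Hlub; intros y [b [Hb ->]].
    destruct (Rle_or_lt (g b) (m - eps)); auto. exfalso; apply Hn; exists b; auto. }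
  exists b0; intros b Hb.
  assert (g b0 <= g b) by (apply Hm; lra).
  assert (g b <= m) by (apply Hub; exists b; split; [lra|auto]).
  rewrite Rabs_left1; lra.
Qed.

Definition imp (f : R -> R) (l : R) : Prop :=
  (forall b, ex_RInt f 0 b) /\
  (forall eps, 0 < eps -> exists B, forall b, B <= b -> Rabs (RInt f 0 b - l) < eps).

Lemma imp_unique f l1 l2 : imp f l1 -> imp f l2 -> l1 = l2.
Proof.
  intros [_ H1] [_ H2].
  apply Rminus_diag_uniq; apply Rabs_eq_0.
  destruct (Rle_lt_or_eq_dec 0 (Rabs (l1 - l2)) (Rabs_pos _)) as [Hp|Hp]; [|auto].
  exfalso.
  destruct (H1 (Rabs (l1-l2)/2)) as [B1 HB1]; [lra|].
  destruct (H2 (Rabs (l1-l2)/2)) as [B2 HB2]; [lra|].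
  specialize (HB1 (Rmax B1 B2) (Rmax_l _ _)).
  specialize (HB2 (Rmax B1 B2) (Rmax_r _ _)).
  set (I := RInt f 0 (Rmax B1 B2)) in *.
  assert (Rabs (l1 - l2) <= Rabs (I - l2) + Rabs (I - l1)).
  { replace (l1 - l2) with ((I - l2) - (I - l1)) by ring. apply Rabs_triang_sym2 || 
    (eapply Rle_trans; [apply Rabs_triang|]; rewrite Rabs_Ropp; lra). }
  lra.
Qed.

Lemma imp_is f l : imp f l -> is_imp_int0 f l.
Proof.
  intros [He Hl]; split.
  - intros b _. constructor. apply ex_RInt_Reals_0, He.
  - intros eps Heps. destruct (Hl eps Heps) as [B HB]. exists B.
    intros b pr Hb. rewrite <- RInt_Reals. auto.
Qed.

Lemma is_imp_unique f l1 l2 : is_imp_int0 f l1 -> is_imp_int0 f l2 -> l1 = l2.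
Proof.
  intros [He H1] [_ H2].
  apply Rminus_diag_uniq; apply Rabs_eq_0.
  destruct (Rle_lt_or_eq_dec 0 (Rabs (l1 - l2)) (Rabs_pos _)) as [Hp|Hp]; [|auto].
  exfalso.
  destruct (H1 (Rabs (l1-l2)/2)) as [B1 HB1]; [lra|].
  destruct (H2 (Rabs (l1-l2)/2)) as [B2 HB2]; [lra|].
  set (b := Rmax 0 (Rmax B1 B2)).
  destruct (He b (Rmax_l _ _)) as [pr].
  assert (B1 <= b) by (unfold b; eapply Rle_trans; [apply Rmax_l|apply Rmax_r]).
  assert (B2 <= b) by (unfold b; eapply Rle_trans; [apply Rmax_r|apply Rmax_r]).
  specialize (HB1 b pr H). specialize (HB2 b pr H0).
  set (I := RiemannInt pr) in *.
  assert (Rabs (l1 - l2) <= Rabs (I - l2) + Rabs (I - l1)).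
  { replace (l1 - l2) with ((I - l2) - (I - l1)) by ring.
    eapply Rle_trans; [apply Rabs_triang|]; rewrite Rabs_Ropp; lra. }
  lra.
Qed.

Lemma imp_ImpInt0 f l : imp f l -> ImpInt0 f = l.
Proof.
  intros H. apply imp_is in H.
  unfold ImpInt0. apply (is_imp_unique f); auto.
  apply epsilon_spec. exists l; auto.
Qed.

Lemma Rabs_le_inv x a : Rabs x <= a -> - a <= x <= a.
Proof. unfold Rabs; destruct (Rcase_abs x); lra. Qed.


Lemma exR_cont (f : R -> R) a b : (forall z, Rmin a b <= z <= Rmax a b -> continuous f z) -> ex_RInt f a b.
Proof. exact (ex_RInt_continuous f a b). Qed.
Lemma exR_minus (f g : R -> R) a b : ex_RInt f a b -> ex_RInt g a b -> ex_RInt (fun x => f x - g x) a b.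
Proof. intros H1 H2. exact (ex_RInt_minus f g a b H1 H2). Qed.
Lemma RIntR_minus (f g : R -> R) a b : ex_RInt f a b -> ex_RInt g a b ->
  RInt (fun x => f x - g x) a b = RInt f a b - RInt g a b.
Proof. intros H1 H2. exact (RInt_minus f g a b H1 H2). Qed.
Lemma RIntR_Chasles (f : R -> R) a b c : ex_RInt f a b -> ex_RInt f b c ->
  RInt f a b + RInt f b c = RInt f a c.
Proof. intros H1 H2. exact (RInt_Chasles f a b c H1 H2). Qed.
Lemma exR_Chasles (f : R -> R) a b c : ex_RInt f a b -> ex_RInt f b c -> ex_RInt f a c.
Proof. intros H1 H2. exact (ex_RInt_Chasles f a b c H1 H2). Qed.

Lemma imp_plus f g a b : imp f a -> imp g b -> imp (fun p => f p + g p) (a + b).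
Proof.
  intros [Hf Hfl] [Hg Hgl]; split.
  - intros c. apply (ex_RInt_plus f g); auto.
  - intros eps He. destruct (Hfl (eps/2)) as [B1 H1]; [lra|].
    destruct (Hgl (eps/2)) as [B2 H2]; [lra|].
    exists (Rmax B1 B2); intros c Hc.
    assert (B1 <= c) by (eapply Rle_trans; [apply Rmax_l|eauto]).
    assert (B2 <= c) by (eapply Rle_trans; [apply Rmax_r|eauto]).
    specialize (H1 c H). specialize (H2 c H0).
    rewrite (RInt_plus f g); auto. unfold plus; simpl.
    replace (RInt f 0 c + RInt g 0 c - (a + b)) with ((RInt f 0 c - a) + (RInt g 0 c - b)) by ring.
    eapply Rle_lt_trans; [apply Rabs_triang|]. lra.
Qed.

Lemma imp_scal f a k : imp f a -> imp (fun p => k * f p) (k * a).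
Proof.
  intros [Hf Hfl]; split.
  - intros c. apply (ex_RInt_scal f); auto.
  - intros eps He.
    destruct (Hfl (eps / (Rabs k + 1))) as [B HB].
    { apply Rdiv_lt_0_compat; auto. pose proof (Rabs_pos k); lra. }
    exists B; intros c Hc. specialize (HB c Hc).
    rewrite (RInt_scal f); auto. unfold scal; simpl. unfold mult; simpl.
    replace (k * RInt f 0 c - k * a) with (k * (RInt f 0 c - a)) by ring.
    rewrite Rabs_mult.
    pose proof (Rabs_pos k). pose proof (Rabs_pos (RInt f 0 c - a)).
    assert (Rabs (RInt f 0 c - a) * (Rabs k + 1) < eps).
    { apply (Rmult_lt_compat_r (Rabs k + 1)) in HB; [|lra].
      unfold Rdiv in HB. rewrite Rmult_assoc, Rinv_l in HB; lra. }
    nra.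
Qed.

Lemma imp_ext f g a : (forall p, f p = g p) -> imp f a -> imp g a.
Proof.
  intros He [Hf Hl]; split.
  - intros c; apply (ex_RInt_ext f); auto.
  - intros eps Heps; destruct (Hl eps Heps) as [B HB]; exists B; intros c Hc.
    rewrite <- (RInt_ext f); auto.
Qed.

Lemma exd_cont (f : R -> R) x : ex_derive f x -> continuous f x.
Proof. intros H. exact (ex_derive_continuous f x H). Qed.

Lemma RInt_maj K b : 0 <= b -> RInt (fun p => K / (1 + p)^2) 0 b = K - K / (1 + b).
Proof.
  intros Hb.
  apply is_RInt_unique.
  replace (K - K / (1 + b)) with (minus (- K / (1 + b)) (- K / (1+0))).
  2:{ unfold minus, plus, opp; simpl. field. lra. }
  apply (is_RInt_derive (fun p => - K / (1 + p)) (fun p => K / (1 + p)^2)).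
  - intros x Hx. rewrite Rmin_left in Hx by lra. rewrite Rmax_right in Hx by lra.
    auto_derive. lra. field. lra.
  - intros x Hx. rewrite Rmin_left in Hx by lra. rewrite Rmax_right in Hx by lra.
    apply exd_cont. auto_derive. intro; nra.
Qed.

Lemma ex_RInt_cont (f : R -> R) (a b : R) : (forall p, continuous f p) -> ex_RInt f a b.
Proof. intros H; exact (ex_RInt_continuous f a b (fun z _ => H z)). Qed.

Lemma imp_exists (f : R -> R) (K : R) : (forall p, continuous f p) ->
  (forall p, 0 <= p -> Rabs (f p) <= K / (1 + p)^2) ->
  exists l, imp f l /\ Rabs l <= K.
Proof.
  intros Hc Hb.
  assert (HK : 0 <= K).
  { specialize (Hb 0 (Rle_refl _)). pose proof (Rabs_pos (f 0)).
    replace ((1+0)^2) with 1 in Hb by ring. lra. }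
  set (J := fun b => RInt (fun p => K / (1 + p)^2 - f p) 0 b).
  assert (HcK : forall p, -1 < p -> continuous (fun p => K / (1 + p)^2) p).
  { intros p Hp. apply exd_cont. auto_derive. intro; nra. }
  assert (Hex : forall a b, 0 <= a -> ex_RInt (fun p => K / (1 + p)^2 - f p) a b -> True) by auto.
  assert (HexK : forall a b, 0 <= a -> 0 <= b -> ex_RInt (fun p => K / (1 + p)^2) a b).
  { intros a b Ha Hb'. apply exR_cont. intros z Hz.
    apply HcK. assert (0 <= Rmin a b) by (apply Rmin_glb; auto). lra. }
  assert (HexJ : forall a b, 0 <= a -> 0 <= b -> ex_RInt (fun p => K / (1 + p)^2 - f p) a b).
  { intros a b Ha Hb'. apply exR_minus; auto. apply ex_RInt_cont; auto. }
  assert (HJeq : forall b, 0 <= b -> J b = K - K / (1 + b) - RInt f 0 b).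
  { intros b Hb'. unfold J. rewrite RIntR_minus; [rewrite RInt_maj; auto| |apply ex_RInt_cont; auto]. apply HexK; lra. }
  destruct (mono_lim J (2 * K)) as [m Hm].
  - intros a b Ha Hab. unfold J.
    rewrite <- (RIntR_Chasles _ 0 a b); try (apply HexJ; lra).
    assert (0 <= RInt (fun p : R => K / (1 + p) ^ 2 - f p) a b); [|lra].
    apply RInt_ge_0; auto. apply HexJ; lra.
    intros x Hx. specialize (Hb x ltac:(lra)). apply Rabs_le_inv in Hb. lra.
  - intros b Hb'. rewrite HJeq; auto.
    assert (Rabs (RInt f 0 b) <= K - K / (1 + b)).
    { eapply Rle_trans. apply abs_RInt_le; auto. apply ex_RInt_cont; auto.
      rewrite <- RInt_maj; auto. apply RInt_le; [lra| |apply HexK; lra|].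
      apply exR_cont. intros z _. apply (continuous_comp f Rabs); auto.
      apply continuous_Rabs.
      intros x Hx. apply Hb; lra. }
    assert (0 <= K / (1 + b)) by (apply Rdiv_le_0_compat; [lra|nra]).
    apply Rabs_le_inv in H. lra.
  - exists (K - m). split.
    + split. intros b; apply ex_RInt_cont; auto.
      intros eps Heps. destruct (Hm (eps/2)) as [B HB]; [lra|].
      exists (Rmax B (Rmax 0 (2 * K / eps))). intros b Hbb.
      assert (B <= b) by (eapply Rle_trans; [apply Rmax_l|eauto]).
      assert (0 <= b) by (eapply Rle_trans; [eapply Rle_trans; [apply Rmax_l|apply Rmax_r]|eauto]).
      assert (2 * K / eps <= b) by (eapply Rle_trans; [eapply Rle_trans; [apply Rmax_r|apply Rmax_r]|eauto]).
      specialize (HB b H). rewrite HJeq in HB; auto.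
      assert (K / (1 + b) < eps / 2).
      { apply Rmult_lt_reg_r with (1 + b); [lra|].
        unfold Rdiv. rewrite Rmult_assoc, Rinv_l by lra.
        apply Rmult_le_compat_r with (r:=eps) in H1; [|lra].
        unfold Rdiv in H1. rewrite Rmult_assoc, Rinv_l in H1 by lra. nra. }
      assert (0 <= K / (1 + b)) by (apply Rdiv_le_0_compat; [lra|nra]).
      replace (RInt f 0 b - (K - m)) with (-(K - K / (1 + b) - RInt f 0 b - m) - K/(1+b)) by ring.
      eapply Rle_lt_trans; [apply Rabs_triang|]. rewrite !Rabs_Ropp.
      rewrite (Rabs_right (K / (1 + b))) by lra. lra.
    +
      assert (Hm0 : forall b, 0 <= b -> J b <= m).
      { intros b Hb'. apply Rnot_lt_le. intro Hlt.
        destruct (Hm (J b - m)) as [B HB]; [lra|].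
        specialize (HB (Rmax b B) (Rmax_r _ _)).
        pose proof (Rmax_l b B).
        assert (J b <= J (Rmax b B)).
        { unfold J. rewrite <- (RIntR_Chasles _ 0 b (Rmax b B)); try (apply HexJ; lra).
          assert (0 <= RInt (fun p : R => K / (1 + p) ^ 2 - f p) b (Rmax b B)); [|lra].
          apply RInt_ge_0; [apply Rmax_l| apply HexJ; lra|].
          intros x Hx. specialize (Hb x ltac:(lra)). apply Rabs_le_inv in Hb. lra. }
        rewrite Rabs_right in HB; lra. }
      assert (J 0 = 0) by (unfold J; rewrite RInt_point; reflexivity).
      specialize (Hm0 0 (Rle_refl _)).
      assert (m <= 2 * K).
      { apply Rnot_lt_le; intro Hlt.
        destruct (Hm (m - 2*K)) as [B HB]; [lra|].
        specialize (HB (Rmax 0 B) (Rmax_r _ _)).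
        assert (J (Rmax 0 B) <= 2 * K).
        { rewrite HJeq by apply Rmax_l.
          assert (HI : Rabs (RInt f 0 (Rmax 0 B)) <= K - K / (1 + (Rmax 0 B))).
          { pose proof (Rmax_l 0 B). eapply Rle_trans. apply abs_RInt_le; auto. apply ex_RInt_cont; auto.
            rewrite <- RInt_maj; auto. apply RInt_le; [lra| |apply HexK; lra|].
            apply exR_cont. intros z _. apply (continuous_comp f Rabs); auto.
            apply continuous_Rabs.
            intros x Hx. apply Hb; lra. }
          pose proof (Rmax_l 0 B).
          assert (0 <= K / (1 + Rmax 0 B)) by (apply Rdiv_le_0_compat; [lra|nra]).
          apply Rabs_le_inv in HI. lra. }
        apply Rabs_def2 in HB. lra. }
      apply Rabs_le. lra.
Qed.

Lemma div_bound a b c e : 0 < e -> e <= b -> Rabs a <= c -> Rabs (a / b) <= c / e.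
Proof.
  intros He Heb Ha. unfold Rdiv. rewrite Rabs_mult, Rabs_inv, (Rabs_right b) by lra.
  apply Rmult_le_compat; try apply Rabs_pos; auto.
  left; apply Rinv_0_lt_compat; lra.
  apply Rinv_le_contravar; lra.
Qed.

Lemma rem2 X d : 0 < X -> Rabs d <= X / 2 ->
  Rabs (/ (X + d)^2 - / X^2 + 2 * d / X^3) <= 16 * d^2 / X^4.
Proof.
  intros HX Hd. apply Rabs_le_inv' in Hd || idtac.
  assert (Hd' : - (X/2) <= d <= X/2) by (unfold Rabs in Hd; destruct (Rcase_abs d); lra).
  assert (HY : X / 2 <= X + d) by lra.
  replace (/ (X + d)^2 - / X^2 + 2 * d / X^3) with ((d^2 * (3 * X + 2 * d)) / (X^3 * (X + d)^2))
    by (field; lra).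
  replace (16 * d^2 / X^4) with ((4 * X * d^2) / (X^3 * (X/2)^2)) by (field; lra).
  apply div_bound.
  - apply Rmult_lt_0_compat; [apply pow_lt; lra| nra].
  - apply Rmult_le_compat_l; [left; apply pow_lt; lra|]. nra.
  - rewrite Rabs_mult, Rabs_right by nra. rewrite Rmult_comm. apply Rmult_le_compat_r; [nra|].
    unfold Rabs; destruct (Rcase_abs (3 * X + 2 * d)); lra.
Qed.

Lemma rem3 X d : 0 < X -> Rabs d <= X / 2 ->
  Rabs (/ (X + d)^3 - / X^3 + 3 * d / X^4) <= 88 * d^2 / X^5.
Proof.
  intros HX Hd.
  assert (Hd' : - (X/2) <= d <= X/2) by (unfold Rabs in Hd; destruct (Rcase_abs d); lra).
  assert (HY : X / 2 <= X + d) by lra.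
  replace (/ (X + d)^3 - / X^3 + 3 * d / X^4) with ((d^2 * (6 * X^2 + 8 * X * d + 3 * d^2)) / (X^4 * (X + d)^3))
    by (field; lra).
  replace (88 * d^2 / X^5) with ((11 * X^2 * d^2) / (X^4 * (X/2)^3)) by (field; lra).
  apply div_bound.
  - apply Rmult_lt_0_compat; [apply pow_lt; lra| apply pow_lt; lra].
  - apply Rmult_le_compat_l; [left; apply pow_lt; lra|].
    apply pow_incr; lra.
  - rewrite Rabs_mult, (Rabs_right (d^2)) by nra. rewrite Rmult_comm. apply Rmult_le_compat_r; [nra|].
    rewrite Rabs_right by nra. nra.
Qed.

Definition f0 (n : nat) (s p : R) := p ^ (2 * n + 1) / ((1 + s * p ^ (2 * n)) ^ 2 * (1 + p ^ 2) ^ 2).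
Definition f1 (n : nat) (s p : R) := -2 * p ^ (2 * n + 1) * p ^ (2 * n) / ((1 + s * p ^ (2 * n)) ^ 3 * (1 + p ^ 2) ^ 2).
Definition f2 (n : nat) (s p : R) := 6 * p ^ (2 * n + 1) * (p ^ (2 * n))^2 / ((1 + s * p ^ (2 * n)) ^ 4 * (1 + p ^ 2) ^ 2).

Lemma pow2n_nonneg n p : 0 <= p ^ (2 * n).
Proof. rewrite pow_mult. apply pow_le. nra. Qed.

Lemma pow2n1 n p : p ^ (2 * n + 1) = p * p ^ (2 * n).
Proof. rewrite Nat.add_comm. simpl. ring. Qed.

Ltac posden n p := change (n + (n + 0))%nat with (2 * n)%nat;
  let H := fresh in pose proof (pow2n_nonneg n p) as H; intro; nra.

Lemma f0_cont n s p : 0 <= s -> continuous (f0 n s) p.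
Proof. intros Hs. apply exd_cont. unfold f0. auto_derive.
  change (n + (n + 0))%nat with (2 * n)%nat.
  pose proof (pow2n_nonneg n p). pose proof (pow2_ge_0 p).
  assert (0 < 1 + s * p ^ (2*n)) by nra. assert (0 < 1 + p * (p * 1)) by nra.
  apply Rgt_not_eq; repeat apply Rmult_lt_0_compat; lra. Qed.
Lemma f1_cont n s p : 0 <= s -> continuous (f1 n s) p.
Proof. intros Hs. apply exd_cont. unfold f1. auto_derive.
  change (n + (n + 0))%nat with (2 * n)%nat.
  pose proof (pow2n_nonneg n p). pose proof (pow2_ge_0 p).
  assert (0 < 1 + s * p ^ (2*n)) by nra. assert (0 < 1 + p * (p * 1)) by nra.
  apply Rgt_not_eq; repeat apply Rmult_lt_0_compat; lra. Qed.
Lemma f2_cont n s p : 0 <= s -> continuous (f2 n s) p.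
Proof. intros Hs. apply exd_cont. unfold f2. auto_derive.
  change (n + (n + 0))%nat with (2 * n)%nat.
  pose proof (pow2n_nonneg n p). pose proof (pow2_ge_0 p).
  assert (0 < 1 + s * p ^ (2*n)) by nra. assert (0 < 1 + p * (p * 1)) by nra.
  apply Rgt_not_eq; repeat apply Rmult_lt_0_compat; lra. Qed.

Definition rr (p : R) := p / (1 + p^2)^2.

Lemma rr_bound p : 0 <= p -> 0 <= rr p <= 2 / (1 + p)^2.
Proof.
  intros Hp. unfold rr. split.
  - apply Rdiv_le_0_compat; [lra| apply pow_lt; nra].
  - apply Rmult_le_reg_r with ((1 + p^2)^2 * (1+p)^2); [apply Rmult_lt_0_compat; apply pow_lt; nra|].
    replace (p / (1 + p ^ 2) ^ 2 * ((1 + p ^ 2) ^ 2 * (1 + p) ^ 2)) with (p * (1+p)^2) by (field; nra).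
    replace (2 / (1 + p) ^ 2 * ((1 + p ^ 2) ^ 2 * (1 + p) ^ 2)) with (2 * (1+p^2)^2) by (field; nra).
    nra.
Qed.

Lemma f0_eq n s p : f0 n s p = rr p * p^(2*n) / (1 + s * p^(2*n))^2.
Proof. unfold f0, rr. rewrite pow2n1. field. pose proof (pow2_ge_0 p). split; [nra|]. Abort.

Lemma yb j k y : 0 <= y -> (j <= k)%nat -> 0 <= y^j / (1+y)^k <= 1.
Proof.
  intros Hy Hjk. split.
  - apply Rdiv_le_0_compat; [apply pow_le; lra| apply pow_lt; lra].
  - apply Rmult_le_reg_r with ((1+y)^k); [apply pow_lt; lra|].
    unfold Rdiv; rewrite Rmult_assoc, Rinv_l, Rmult_1_r, Rmult_1_l by (apply pow_nonzero; lra).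
    apply Rle_trans with ((1+y)^j). apply pow_incr; lra. apply Rle_pow; auto; lra.
Qed.

Lemma G0 r x s : 0 <= r -> 0 <= x -> 0 < s -> Rabs (r * x / (1 + s * x)^2) <= r / s.
Proof.
  intros Hr Hx Hs.
  replace (r * x / (1 + s * x)^2) with (r / s * ((s*x)^1 / (1 + s*x)^2)) by (field; nra).
  destruct (yb 1 2 (s*x)) as [H1 H2]; [nra|lia|].
  assert (0 <= r / s) by (apply Rdiv_le_0_compat; lra).
  rewrite Rabs_right by nra. nra.
Qed.

Lemma G1 r x s : 0 <= r -> 0 <= x -> 0 < s -> Rabs (-2 * r * x * x / (1 + s * x)^3) <= 2 * r / s^2.
Proof.
  intros Hr Hx Hs.
  replace (-2 * r * x * x / (1 + s * x)^3) with (- (2 * r / s^2 * ((s*x)^2 / (1 + s*x)^3))) by (field; nra).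
  destruct (yb 2 3 (s*x)) as [H1 H2]; [nra|lia|].
  assert (0 <= 2 * r / s^2) by (apply Rdiv_le_0_compat; nra).
  rewrite Rabs_Ropp, Rabs_right by nra. nra.
Qed.

Lemma G2 r x s : 0 <= r -> 0 <= x -> 0 < s -> Rabs (6 * r * x * x^2 / (1 + s * x)^4) <= 6 * r / s^3.
Proof.
  intros Hr Hx Hs.
  replace (6 * r * x * x^2 / (1 + s * x)^4) with (6 * r / s^3 * ((s*x)^3 / (1 + s*x)^4)) by (field; nra).
  destruct (yb 3 4 (s*x)) as [H1 H2]; [nra|lia|].
  assert (0 <= 6 * r / s^3) by (apply Rdiv_le_0_compat; [nra| apply pow_lt; lra]).
  rewrite Rabs_right by nra. nra.
Qed.

Lemma GR0 r x s h : 0 <= r -> 0 <= x -> 0 < s -> Rabs h <= s / 2 ->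
  Rabs (r * x / (1 + (s + h) * x)^2 - r * x / (1 + s * x)^2 - h * (-2 * r * x * x / (1 + s * x)^3))
  <= 16 * h^2 * r / s^3.
Proof.
  intros Hr Hx Hs Hh.
  assert (HX : 0 < 1 + s * x) by nra.
  assert (Hd : Rabs (h * x) <= (1 + s * x) / 2).
  { rewrite Rabs_mult, (Rabs_right x) by lra. nra. }
  pose proof (rem2 (1 + s*x) (h*x) HX Hd) as HR.
  replace (r * x / (1 + (s + h) * x)^2 - r * x / (1 + s * x)^2 - h * (-2 * r * x * x / (1 + s * x)^3))
    with (r * x * (/ (1 + s * x + h * x)^2 - / (1 + s * x)^2 + 2 * (h * x) / (1 + s * x)^3)).
  2:{ replace (1 + (s + h) * x) with (1 + s * x + h * x) by ring.
      assert (0 < 1 + s * x + h * x) by (apply Rabs_le_inv in Hd; lra).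
      field; lra. }
  rewrite Rabs_mult, (Rabs_right (r * x)) by nra.
  apply Rle_trans with (r * x * (16 * (h * x) ^ 2 / (1 + s * x) ^ 4)).
  apply Rmult_le_compat_l; [nra|auto].
  replace (r * x * (16 * (h * x) ^ 2 / (1 + s * x) ^ 4)) with (16 * h^2 * r / s^3 * ((s*x)^3/(1+s*x)^4)) by (field; nra).
  destruct (yb 3 4 (s*x)) as [H1 H2]; [nra|lia|].
  assert (0 <= 16 * h^2 * r / s^3) by (apply Rdiv_le_0_compat; [nra| apply pow_lt; lra]).
  nra.
Qed.

Lemma GR1 r x s h : 0 <= r -> 0 <= x -> 0 < s -> Rabs h <= s / 2 ->
  Rabs (-2 * r * x * x / (1 + (s + h) * x)^3 - -2 * r * x * x / (1 + s * x)^3 - h * (6 * r * x * x^2 / (1 + s * x)^4))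
  <= 176 * h^2 * r / s^4.
Proof.
  intros Hr Hx Hs Hh.
  assert (HX : 0 < 1 + s * x) by nra.
  assert (Hd : Rabs (h * x) <= (1 + s * x) / 2).
  { rewrite Rabs_mult, (Rabs_right x) by lra. nra. }
  pose proof (rem3 (1 + s*x) (h*x) HX Hd) as HR.
  replace (-2 * r * x * x / (1 + (s + h) * x)^3 - -2 * r * x * x / (1 + s * x)^3 - h * (6 * r * x * x^2 / (1 + s * x)^4))
    with (-2 * r * x * x * (/ (1 + s * x + h * x)^3 - / (1 + s * x)^3 + 3 * (h * x) / (1 + s * x)^4)).
  2:{ replace (1 + (s + h) * x) with (1 + s * x + h * x) by ring.
      assert (0 < 1 + s * x + h * x) by (apply Rabs_le_inv in Hd; lra).
      field; lra. }
  rewrite Rabs_mult, Rabs_mult, Rabs_mult, Rabs_mult, (Rabs_right r), (Rabs_right x), (Rabs_left (-2)) by lra.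
  apply Rle_trans with (--2 * r * x * x * (88 * (h * x) ^ 2 / (1 + s * x) ^ 5)).
  apply Rmult_le_compat_l; [nra|auto].
  replace (--2 * r * x * x * (88 * (h * x) ^ 2 / (1 + s * x) ^ 5)) with (176 * h^2 * r / s^4 * ((s*x)^4/(1+s*x)^5)) by (field; nra).
  destruct (yb 4 5 (s*x)) as [H1 H2]; [nra|lia|].
  assert (0 <= 176 * h^2 * r / s^4) by (apply Rdiv_le_0_compat; [nra| apply pow_lt; lra]).
  nra.
Qed.

Lemma f0_eq n s p : f0 n s p = rr p * p^(2*n) / (1 + s * p^(2*n))^2.
Proof. unfold f0, rr. rewrite pow2n1. unfold Rdiv. rewrite Rinv_mult. ring. Qed.
Lemma f1_eq n s p : f1 n s p = -2 * rr p * p^(2*n) * p^(2*n) / (1 + s * p^(2*n))^3.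
Proof. unfold f1, rr. rewrite pow2n1. unfold Rdiv. rewrite Rinv_mult. ring. Qed.
Lemma f2_eq n s p : f2 n s p = 6 * rr p * p^(2*n) * (p^(2*n))^2 / (1 + s * p^(2*n))^4.
Proof. unfold f2, rr. rewrite pow2n1. unfold Rdiv. rewrite Rinv_mult. ring. Qed.

Definition I0 n s := ImpInt0 (f0 n s).
Definition I1 n s := ImpInt0 (f1 n s).
Definition I2 n s := ImpInt0 (f2 n s).

Lemma maj_step (c r p : R) : 0 <= c -> 0 <= p -> 0 <= r <= 2 / (1+p)^2 -> c * r <= 2 * c / (1 + p)^2.
Proof. intros Hc Hp [H1 H2]. unfold Rdiv in *. nra. Qed.

Lemma I0_imp n s : 0 < s -> imp (f0 n s) (I0 n s) /\ Rabs (I0 n s) <= 2 * (1/s).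
Proof.
  intros Hs. destruct (imp_exists (f0 n s) (2 * (1/s))) as [l [Hl Hb]].
  - intros p; apply f0_cont; lra.
  - intros p Hp. rewrite f0_eq. eapply Rle_trans. apply G0; try lra. apply rr_bound; auto. apply pow2n_nonneg.
    replace (rr p / s) with ((1/s) * rr p) by (field; lra).
    apply maj_step; auto. left; apply Rdiv_lt_0_compat; lra. apply rr_bound; auto.
  - unfold I0. rewrite (imp_ImpInt0 _ l); auto.
Qed.

Lemma I1_imp n s : 0 < s -> imp (f1 n s) (I1 n s) /\ Rabs (I1 n s) <= 2 * (2/s^2).
Proof.
  intros Hs. destruct (imp_exists (f1 n s) (2 * (2/s^2))) as [l [Hl Hb]].
  - intros p; apply f1_cont; lra.
  - intros p Hp. rewrite f1_eq. eapply Rle_trans. apply G1; try lra. apply rr_bound; auto. apply pow2n_nonneg.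
    replace (2 * rr p / s^2) with ((2/s^2) * rr p) by (field; lra).
    apply maj_step; auto. left; apply Rdiv_lt_0_compat; [lra|nra]. apply rr_bound; auto.
  - unfold I1. rewrite (imp_ImpInt0 _ l); auto.
Qed.

Lemma I2_imp n s : 0 < s -> imp (f2 n s) (I2 n s) /\ Rabs (I2 n s) <= 2 * (6/s^3).
Proof.
  intros Hs. destruct (imp_exists (f2 n s) (2 * (6/s^3))) as [l [Hl Hb]].
  - intros p; apply f2_cont; lra.
  - intros p Hp. rewrite f2_eq. eapply Rle_trans. apply G2; try lra. apply rr_bound; auto. apply pow2n_nonneg.
    replace (6 * rr p / s^3) with ((6/s^3) * rr p) by (field; lra).
    apply maj_step; auto. left; apply Rdiv_lt_0_compat; [lra|apply pow_lt; lra]. apply rr_bound; auto.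
  - unfold I2. rewrite (imp_ImpInt0 _ l); auto.
Qed.

Lemma der_from_rem (I J : R -> R) s C : 0 < s -> 0 <= C ->
  (forall h, Rabs h <= s / 2 -> Rabs (I (s + h) - I s - h * J s) <= C * h^2) ->
  derivable_pt_lim I s (J s).
Proof.
  intros Hs HC Hr eps Heps.
  assert (Hd : 0 < Rmin (s/2) (eps / (C + 1))).
  { apply Rmin_pos; [lra| apply Rdiv_lt_0_compat; lra]. }
  exists (mkposreal _ Hd). intros h Hh0 Hh. simpl in Hh.
  assert (Hh1 : Rabs h <= s / 2) by (pose proof (Rmin_l (s/2) (eps/(C+1))); lra).
  assert (Hh2 : Rabs h < eps / (C + 1)) by (pose proof (Rmin_r (s/2) (eps/(C+1))); lra).
  specialize (Hr h Hh1).
  replace ((I (s + h) - I s) / h - J s) with ((I (s + h) - I s - h * J s) / h) by (field; auto).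
  assert (Hah : 0 < Rabs h) by (apply Rabs_pos_lt; auto).
  unfold Rdiv. rewrite Rabs_mult, Rabs_inv.
  apply Rmult_lt_reg_r with (Rabs h); auto.
  rewrite Rmult_assoc, Rinv_l, Rmult_1_r by lra.
  apply Rle_lt_trans with (C * h^2); auto.
  replace (h^2) with (Rabs h * Rabs h) by (rewrite <- Rabs_mult; rewrite Rabs_right; [ring| nra]).
  assert (Rabs h * (C + 1) < eps).
  { apply Rmult_lt_compat_r with (r := C+1) in Hh2; [|lra].
    unfold Rdiv in Hh2; rewrite Rmult_assoc, Rinv_l in Hh2; lra. }
  nra.
Qed.

Lemma I0_der n s : 0 < s -> derivable_pt_lim (I0 n) s (I1 n s).
Proof.
  intros Hs. apply der_from_rem with (C := 2 * (16 / s^3)); auto.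
  { apply Rmult_le_pos; [lra|]. apply Rdiv_le_0_compat; [lra|apply pow_lt; lra]. }
  intros h Hh.
  assert (Hsh : 0 < s + h) by (apply Rabs_le_inv in Hh; lra).
  destruct (I0_imp n (s+h) Hsh) as [Ha _].
  destruct (I0_imp n s Hs) as [Hb _].
  destruct (I1_imp n s Hs) as [Hc _].
  assert (Himp : imp (fun p => f0 n (s+h) p - f0 n s p - h * f1 n s p) (I0 n (s + h) + -1 * I0 n s + -h * I1 n s)).
  { eapply imp_ext; [|apply imp_plus; [apply imp_plus; [exact Ha| apply imp_scal with (k := -1); exact Hb] | apply imp_scal with (k := -h); exact Hc]].
    intros p; simpl; ring. }
  replace (I0 n (s + h) - I0 n s - h * I1 n s) with (I0 n (s + h) + -1 * I0 n s + -h * I1 n s) by ring.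
  destruct (imp_exists (fun p => f0 n (s+h) p - f0 n s p - h * f1 n s p) (2 * (16 / s^3) * h^2)) as [l [Hl Hlb]].
  - intros p. apply (continuous_minus (V:=R_NormedModule)). apply (continuous_minus (V:=R_NormedModule)); apply f0_cont; lra.
    apply (continuous_scal_r (K:=R_AbsRing) (V:=R_NormedModule) h (f1 n s)). apply f1_cont; lra.
  - intros p Hp. rewrite !f0_eq, f1_eq.
    eapply Rle_trans. apply GR0; auto. apply rr_bound; auto. apply pow2n_nonneg.
    replace (16 * h^2 * rr p / s^3) with ((16 / s^3 * h^2) * rr p) by (field; lra).
    replace (2 * (16 / s ^ 3) * h ^ 2 / (1 + p) ^ 2) with (2 * (16 / s ^ 3 * h ^ 2) / (1 + p) ^ 2) by (field; nra).
    apply maj_step; auto. apply Rmult_le_pos; [apply Rdiv_le_0_compat; [lra|apply pow_lt; lra]|nra]. apply rr_bound; auto.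
  - pose proof (imp_unique _ _ _ Himp Hl) as E.
    rewrite E. auto.
Qed.

Lemma I1_der n s : 0 < s -> derivable_pt_lim (I1 n) s (I2 n s).
Proof.
  intros Hs. apply der_from_rem with (C := 2 * (176 / s^4)); auto.
  { apply Rmult_le_pos; [lra|]. apply Rdiv_le_0_compat; [lra|apply pow_lt; lra]. }
  intros h Hh.
  assert (Hsh : 0 < s + h) by (apply Rabs_le_inv in Hh; lra).
  destruct (I1_imp n (s+h) Hsh) as [Ha _].
  destruct (I1_imp n s Hs) as [Hb _].
  destruct (I2_imp n s Hs) as [Hc _].
  assert (Himp : imp (fun p => f1 n (s+h) p - f1 n s p - h * f2 n s p) (I1 n (s + h) + -1 * I1 n s + -h * I2 n s)).
  { eapply imp_ext; [|apply imp_plus; [apply imp_plus; [exact Ha| apply imp_scal with (k := -1); exact Hb] | apply imp_scal with (k := -h); exact Hc]].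
    intros p; simpl; ring. }
  replace (I1 n (s + h) - I1 n s - h * I2 n s) with (I1 n (s + h) + -1 * I1 n s + -h * I2 n s) by ring.
  destruct (imp_exists (fun p => f1 n (s+h) p - f1 n s p - h * f2 n s p) (2 * (176 / s^4) * h^2)) as [l [Hl Hlb]].
  - intros p. apply (continuous_minus (V:=R_NormedModule)). apply (continuous_minus (V:=R_NormedModule)); apply f1_cont; lra.
    apply (continuous_scal_r (K:=R_AbsRing) (V:=R_NormedModule) h (f2 n s)). apply f2_cont; lra.
  - intros p Hp. rewrite !f1_eq, f2_eq.
    eapply Rle_trans. apply GR1; auto. apply rr_bound; auto. apply pow2n_nonneg.
    replace (176 * h^2 * rr p / s^4) with ((176 / s^4 * h^2) * rr p) by (field; lra).
    replace (2 * (176 / s ^ 4) * h ^ 2 / (1 + p) ^ 2) with (2 * (176 / s ^ 4 * h ^ 2) / (1 + p) ^ 2) by (field; nra).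
    apply maj_step; auto. apply Rmult_le_pos; [apply Rdiv_le_0_compat; [lra|apply pow_lt; lra]|nra]. apply rr_bound; auto.
  - pose proof (imp_unique _ _ _ Himp Hl) as E.
    rewrite E. auto.
Qed.

Lemma RInt_pow m a b : a <= b -> RInt (fun p => p^m) a b = (b^(S m) - a^(S m)) / INR (S m).
Proof.
  intros Hab. apply is_RInt_unique.
  assert (Hc : 0 < INR (S m)) by (apply lt_0_INR; lia).
  set (c := INR (S m)) in *.
  replace ((b^(S m) - a^(S m)) / c) with (minus (b^(S m) / c) (a^(S m) / c)).
  2:{ unfold minus, plus, opp; simpl. field. lra. }
  apply (is_RInt_derive (fun p => p^(S m) / c) (fun p => p^m)).
  - intros x _. auto_derive. auto. unfold c. change (match m with | 0%nat => 1 | S _ => INR m + 1 end) with (INR (S m)). field. unfold c in *; lra.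
  - intros x _. apply exd_cont. auto_derive. auto.
Qed.

Lemma RInt_invpow m a b : (1 <= m)%nat -> 0 < a -> a <= b ->
  RInt (fun p => / p^(S m)) a b = (/ a^m - / b^m) / INR m.
Proof.
  intros Hm Ha Hab. apply is_RInt_unique.
  assert (HI : INR m <> 0) by (apply not_0_INR; lia).
  replace ((/ a^m - / b^m) / INR m) with (minus (- / (INR m * b^m)) (- / (INR m * a^m))).
  2:{ unfold minus, plus, opp; simpl. field. repeat split; try apply pow_nonzero; try lra; auto. }
  apply (is_RInt_derive (fun p => - / (INR m * p^m)) (fun p => / p^(S m))).
  - intros x Hx. rewrite Rmin_left in Hx by lra. rewrite Rmax_right in Hx by lra.
    auto_derive. apply Rmult_integral_contrapositive_currified; auto. apply pow_nonzero; lra.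
    destruct m as [|k]; [lia|]. simpl Init.Nat.pred.
    assert (x <> 0) by lra. assert (x ^ k <> 0) by (apply pow_nonzero; lra).
    replace (x ^ S (S k)) with (x * x * x^k) by (simpl; ring).
    replace (x ^ S k) with (x * x^k) by (simpl; ring). field. auto.
  - intros x Hx. rewrite Rmin_left in Hx by lra. rewrite Rmax_right in Hx by lra.
    apply exd_cont. auto_derive. apply Rmult_integral_contrapositive_currified; [lra| apply pow_nonzero; lra].
Qed.

Lemma exR_any (f : R -> R) a c : (forall b, ex_RInt f 0 b) -> ex_RInt f a c.
Proof. intros He. apply (exR_Chasles f a 0 c); auto. apply ex_RInt_swap; auto. Qed.

Lemma imp_lower (f : R -> R) l : imp f l -> (forall p, 0 <= p -> 0 <= f p) -> forall b, 0 <= b -> RInt f 0 b <= l.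
Proof.
  intros [He Hl] Hf b Hb. apply Rnot_lt_le; intro Hlt.
  destruct (Hl (RInt f 0 b - l)) as [B HB]; [lra|].
  pose proof (Rmax_l b B). pose proof (Rmax_r b B).
  specialize (HB (Rmax b B) H0).
  assert (RInt f 0 b <= RInt f 0 (Rmax b B)).
  { rewrite <- (RIntR_Chasles f 0 b (Rmax b B)); [|auto|apply exR_any; auto].
    assert (0 <= RInt f b (Rmax b B)); [|lra].
    apply RInt_ge_0; [lra| apply exR_any; auto| intros x Hx; apply Hf; lra]. }
  apply Rabs_def2 in HB. lra.
Qed.

Lemma imp_upper (f : R -> R) l M B0 c : imp f l -> 0 < B0 -> 0 <= c ->
  (forall b, B0 <= b -> RInt f 0 b <= M + c / b) -> l <= M.
Proof.
  intros [He Hl] HB0 Hc Hb. apply Rnot_lt_le; intro Hlt.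
  set (eps := (l - M) / 2).
  destruct (Hl eps) as [B HB]; [unfold eps; lra|].
  set (b := Rmax B (Rmax B0 (c / eps))).
  assert (B <= b) by apply Rmax_l.
  assert (B0 <= b) by (unfold b; eapply Rle_trans; [apply Rmax_l|apply Rmax_r]).
  assert (c / eps <= b) by (unfold b; eapply Rle_trans; [apply Rmax_r|apply Rmax_r]).
  specialize (HB b H). specialize (Hb b H0).
  assert (c / b <= eps).
  { assert (0 < eps) by (unfold eps; lra).
    apply Rmult_le_reg_r with b; [lra|]. unfold Rdiv. rewrite Rmult_assoc, Rinv_l, Rmult_1_r by lra.
    apply Rmult_le_compat_r with (r := eps) in H1; [|lra].
    unfold Rdiv in H1; rewrite Rmult_assoc, Rinv_l, Rmult_1_r in H1 by lra. lra. }
  apply Rabs_def2 in HB. unfold eps in *. lra.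
Qed.

Lemma imp_lower0 (f : R -> R) l B0 : imp f l -> (forall b, B0 <= b -> 0 <= RInt f 0 b) -> 0 <= l.
Proof.
  intros [He Hl] Hb. apply Rnot_lt_le; intro Hlt.
  destruct (Hl (- l)) as [B HB]; [lra|].
  specialize (HB (Rmax B B0) (Rmax_l _ _)). specialize (Hb (Rmax B B0) (Rmax_r _ _)).
  apply Rabs_def2 in HB. lra.
Qed.

Lemma RIntR_scal (f : R -> R) a b k : ex_RInt f a b -> RInt (fun x => k * f x) a b = k * RInt f a b.
Proof. intros H. exact (RInt_scal f a b k H). Qed.

Lemma exR_scal (f : R -> R) a b k : ex_RInt f a b -> ex_RInt (fun x => k * f x) a b.
Proof. intros H. exact (ex_RInt_scal f a b k H). Qed.

Lemma pow_cont m p : continuous (fun p : R => p ^ m) p.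
Proof. apply exd_cont. auto_derive. auto. Qed.

Lemma f0_nonneg n s p : 0 <= s -> 0 <= p -> 0 <= f0 n s p.
Proof.
  intros Hs Hp. unfold f0. pose proof (pow2n_nonneg n p).
  apply Rdiv_le_0_compat. apply pow_le; lra.
  apply Rmult_lt_0_compat; apply pow_lt; nra.
Qed.

Lemma f0_le_pow n s p : 0 <= s -> 0 <= p -> f0 n s p <= p^(2*n+1).
Proof.
  intros Hs Hp. unfold f0. pose proof (pow2n_nonneg n p).
  assert (1 <= (1 + s * p ^ (2 * n))^2) by (rewrite <- (pow1 2); apply pow_incr; nra).
  assert (1 <= (1 + p ^ 2)^2) by (rewrite <- (pow1 2); apply pow_incr; nra).
  assert (0 <= p^(2*n+1)) by (apply pow_le; lra).
  assert (1 <= (1 + s * p ^ (2 * n)) ^ 2 * (1 + p ^ 2) ^ 2) by nra.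
  apply Rmult_le_reg_r with ((1 + s * p ^ (2 * n)) ^ 2 * (1 + p ^ 2) ^ 2); [nra|].
  unfold Rdiv. rewrite Rmult_assoc, Rinv_l by nra. nra.
Qed.

Lemma f0_ge_small n mu p : 0 < mu <= 1 -> 0 <= p <= mu ->
  p^(2*n+1) / 16 <= f0 n (/ mu^(2*n)) p.
Proof.
  intros Hmu Hp. unfold f0.
  assert (Ht : 0 < mu^(2*n)) by (apply pow_lt; lra).
  assert (Hx : p^(2*n) <= mu^(2*n)) by (apply pow_incr; lra).
  pose proof (pow2n_nonneg n p).
  assert (Hsx : / mu^(2*n) * p^(2*n) <= 1).
  { apply Rmult_le_reg_l with (mu^(2*n)); auto. rewrite <- Rmult_assoc, Rinv_r, Rmult_1_l, Rmult_1_r by lra. lra. }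
  assert (0 <= / mu^(2*n) * p^(2*n)) by (apply Rmult_le_pos; [left; apply Rinv_0_lt_compat|]; lra).
  assert (H1 : (1 + / mu ^ (2 * n) * p ^ (2 * n)) ^ 2 <= 4).
  { set (a := / mu ^ (2 * n) * p ^ (2 * n)) in *. nra. }
  assert (H2 : (1 + p ^ 2) ^ 2 <= 4).
  { assert (p^2 <= 1) by nra. set (a := p^2) in *. assert (0 <= a) by (unfold a; nra). nra. }
  assert (0 <= p^(2*n+1)) by (apply pow_le; lra).
  assert (0 < (1 + / mu ^ (2 * n) * p ^ (2 * n)) ^ 2 * (1 + p ^ 2) ^ 2) by (apply Rmult_lt_0_compat; nra).
  apply Rmult_le_reg_r with ((1 + / mu ^ (2 * n) * p ^ (2 * n)) ^ 2 * (1 + p ^ 2) ^ 2); auto.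
  assert ((1 + / mu ^ (2 * n) * p ^ (2 * n)) ^ 2 * (1 + p ^ 2) ^ 2 <= 16).
  { assert (0 <= (1 + / mu ^ (2 * n) * p ^ (2 * n)) ^ 2) by nra. assert (0 <= (1 + p ^ 2) ^ 2) by nra. nra. }
  set (D := (1 + / mu ^ (2 * n) * p ^ (2 * n)) ^ 2 * (1 + p ^ 2) ^ 2) in *.
  replace (p ^ (2 * n + 1) / D * D) with (p^(2*n+1)) by (field; lra).
  replace (p ^ (2 * n + 1) / 16 * D) with (p^(2*n+1) * (D / 16)) by (field; lra).
  assert (D / 16 <= 1) by lra. nra.
Qed.

(* p^(2n) = p^(S k) * p with k = 2n - 2 *)
Lemma f0_le_large n mu p : (1 <= n)%nat -> 0 < mu -> 0 < p ->
  f0 n (/ mu^(2*n)) p <= (mu^(2*n))^2 * / p^(S (2*n-2)).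
Proof.
  intros Hn Hmu Hp. unfold f0.
  set (t := mu^(2*n)). assert (Ht : 0 < t) by (apply pow_lt; lra).
  assert (Hxe : p^(2*n) = p^(S (2*n-2)) * p).
  { replace (2*n)%nat with (S (S (2*n-2))) at 1 by lia. simpl. ring. }
  assert (Hpk : 0 < p^(S (2*n-2))) by (apply pow_lt; lra).
  set (y := p^(S (2*n-2))) in *.
  rewrite pow2n1, Hxe.
  assert (1 <= (1 + p ^ 2)^2) by (rewrite <- (pow1 2); apply pow_incr; nra).
  assert (Hsx : y * p / t <= 1 + / t * (y * p)).
  { assert (0 < / t) by (apply Rinv_0_lt_compat; lra).
    replace (y * p / t) with (/t * (y * p)) by (field; lra). nra. }
  assert (0 < y * p / t) by (apply Rdiv_lt_0_compat; nra).
  assert (HA : (y * p / t)^2 <= (1 + / t * (y * p))^2) by (apply pow_incr; lra).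
  apply Rle_trans with (p * (y * p) / ((y * p / t)^2 * 1)).
  - unfold Rdiv. apply Rmult_le_compat_l; [nra|]. apply Rinv_le_contravar; [nra|].
    apply Rmult_le_compat; nra.
  - right. field. lra.
Qed.

Lemma ex_f0 n s a b : 0 <= s -> ex_RInt (f0 n s) a b.
Proof. intros Hs. apply ex_RInt_cont. intros p; apply f0_cont; auto. Qed.

Lemma ex_pow m a b : ex_RInt (fun p => p^m) a b.
Proof. apply ex_RInt_cont. intros p; apply pow_cont. Qed.

Lemma ex_invpow m a b : 0 < a -> a <= b -> ex_RInt (fun p => / p^m) a b.
Proof.
  intros Ha Hab. apply exR_cont. intros z Hz. rewrite Rmin_left in Hz by lra.
  apply exd_cont. auto_derive. apply pow_nonzero; lra.
Qed.

Lemma I0_lower n mu : (1 <= n)%nat -> 0 < mu <= 1 ->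
  / 16 * (mu^(S (2*n+1)) / INR (S (2*n+1))) <= I0 n (/ mu^(2*n)).
Proof.
  intros Hn Hmu.
  assert (Hs : 0 < / mu^(2*n)) by (apply Rinv_0_lt_compat, pow_lt; lra).
  destruct (I0_imp n _ Hs) as [Hi _].
  apply Rle_trans with (RInt (f0 n (/ mu^(2*n))) 0 mu).
    replace (mu ^ S (2 * n + 1) / INR (S (2 * n + 1))) with ((mu ^ S (2 * n + 1) - 0 ^ S (2 * n + 1)) / INR (S (2 * n + 1))) by (replace (0 ^ S (2*n+1)) with 0 by (simpl; ring); unfold Rdiv; ring).
    rewrite <- RInt_pow by lra. rewrite <- RIntR_scal by apply ex_pow.
    apply RInt_le; try lra. apply exR_scal, ex_pow. apply ex_f0; lra.
    intros x Hx. rewrite Rmult_comm. apply f0_ge_small; lra.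
  - apply imp_lower; auto. intros p Hp; apply f0_nonneg; lra. lra.
Qed.

Lemma mu_pow_id n mu : (1 <= n)%nat -> 0 < mu ->
  (mu^(2*n))^2 / mu^(2*n-2) = mu^(S (2*n+1)).
Proof.
  intros Hn Hmu.
  assert (mu^(2*n-2) <> 0) by (apply pow_nonzero; lra).
  replace ((mu ^ (2 * n)) ^ 2) with (mu^(2*n-2) * mu^(S (2*n+1))).
  field; auto.
  rewrite <- pow_mult, <- pow_add. f_equal. lia.
Qed.

Lemma I0_upper n mu : (2 <= n)%nat -> 0 < mu <= 1 ->
  I0 n (/ mu^(2*n)) <= mu^(S (2*n+1)) * (/ INR (S (2*n+1)) + / INR (2*n-2)).
Proof.
  intros Hn Hmu.
  assert (Hs : 0 < / mu^(2*n)) by (apply Rinv_0_lt_compat, pow_lt; lra).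
  destruct (I0_imp n _ Hs) as [Hi _].
  assert (HkI : 0 < INR (2*n-2)) by (apply lt_0_INR; lia).
  apply (imp_upper _ _ _ mu 0 Hi); try lra.
  intros b Hb. rewrite Rdiv_0_l, Rplus_0_r.
  rewrite <- (RIntR_Chasles _ 0 mu b) by (apply ex_f0; lra).
  assert (E1 : RInt (f0 n (/ mu ^ (2 * n))) 0 mu <= mu^(S (2*n+1)) / INR (S (2*n+1))).
  { replace (mu ^ S (2 * n + 1) / INR (S (2 * n + 1))) with ((mu ^ S (2 * n + 1) - 0 ^ S (2 * n + 1)) / INR (S (2 * n + 1))) by (replace (0 ^ S (2*n+1)) with 0 by (simpl; ring); unfold Rdiv; ring).
    rewrite <- RInt_pow by lra.
    apply RInt_le; try lra. apply ex_f0; lra. apply ex_pow.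
    intros x Hx. apply f0_le_pow; lra. }
  assert (E2 : RInt (f0 n (/ mu ^ (2 * n))) mu b <= mu^(S (2*n+1)) / INR (2*n-2)).
  { apply Rle_trans with (RInt (fun p => (mu^(2*n))^2 * / p^(S (2*n-2))) mu b).
    - apply RInt_le; auto. apply ex_f0; lra. apply exR_scal, ex_invpow; lra.
      intros x Hx. apply f0_le_large; lia || lra.
    - rewrite RIntR_scal by (apply ex_invpow; lra).
      rewrite RInt_invpow by (lia || lra).
      rewrite <- mu_pow_id by (lia || lra).
      assert (0 < / b ^ (2 * n - 2)) by (apply Rinv_0_lt_compat, pow_lt; lra).
      assert (0 < (mu ^ (2 * n)) ^ 2) by (apply pow_lt, pow_lt; lra).
      assert (0 < / mu ^ (2 * n - 2)) by (apply Rinv_0_lt_compat, pow_lt; lra).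
      unfold Rdiv. assert (0 < / INR (2 * n - 2)) by (apply Rinv_0_lt_compat; lra).
      rewrite Rmult_assoc.
      apply Rmult_le_compat_l; [lra|]. apply Rmult_le_compat_r; lra. }
  unfold Rdiv in *. lra.
Qed.

Definition kf n s p := s * f1 n s p + (1 + / INR n) * f0 n s p.
Definition gf n s p := p * f0 n s p.
Definition mf n s p := 4 * p^(2*n+3) / ((1 + s * p^(2*n))^2 * (1 + p^2)^3).

Lemma gf_der n s p : (1 <= n)%nat -> 0 <= s ->
  is_derive (gf n s) p (2 * INR n * kf n s p - mf n s p).
Proof.
  intros Hn Hs. unfold gf, kf, mf, f0, f1. auto_derive.
  - change (n + (n + 0))%nat with (2 * n)%nat.
    pose proof (pow2n_nonneg n p). pose proof (pow2_ge_0 p).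
    assert (0 < 1 + s * p ^ (2*n)) by nra. assert (0 < 1 + p * (p * 1)) by nra.
    apply Rgt_not_eq; repeat apply Rmult_lt_0_compat; lra.
  - change (n + (n + 0))%nat with (2 * n)%nat.
    replace (Init.Nat.pred (2*n+1)) with (2*n)%nat by lia.
    rewrite !pow_add. rewrite plus_INR, !mult_INR.
    assert (HnI : INR n <> 0) by (apply not_0_INR; lia).
    pose proof (pow2n_nonneg n p). pose proof (pow2_ge_0 p).
    assert (0 < 1 + s * p ^ (2*n)) by nra. assert (0 < 1 + p * (p * 1)) by nra.
    remember (Nat.pred (2*n)) as k.
    assert (Hk : (2*n = S k)%nat) by lia. rewrite Hk in *.
    simpl pow in *. simpl INR.
    field. repeat split; try lra; nra.
Qed.

Lemma mf_cont n s p : 0 <= s -> continuous (mf n s) p.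
Proof. intros Hs. apply exd_cont. unfold mf. auto_derive.
  change (n + (n + 0))%nat with (2 * n)%nat.
  pose proof (pow2n_nonneg n p). pose proof (pow2_ge_0 p).
  assert (0 < 1 + s * p ^ (2*n)) by nra. assert (0 < 1 + p * (p * 1)) by nra.
  apply Rgt_not_eq; repeat apply Rmult_lt_0_compat; lra. Qed.

Lemma kf_cont n s p : 0 <= s -> continuous (kf n s) p.
Proof. intros Hs. unfold kf.
  apply (continuous_plus (V:=R_NormedModule)).
  apply (continuous_scal_r (K:=R_AbsRing) (V:=R_NormedModule) s (f1 n s)). apply f1_cont; lra.
  apply (continuous_scal_r (K:=R_AbsRing) (V:=R_NormedModule) _ (f0 n s)). apply f0_cont; lra.
Qed.

Lemma mf_nonneg n s p : 0 <= s -> 0 <= p -> 0 <= mf n s p.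
Proof.
  intros Hs Hp. unfold mf. pose proof (pow2n_nonneg n p).
  apply Rdiv_le_0_compat. apply Rmult_le_pos; [lra|apply pow_le; lra].
  apply Rmult_lt_0_compat; apply pow_lt; nra.
Qed.

Lemma mf_le_pow n s p : 0 <= s -> 0 <= p -> mf n s p <= 4 * p^(2*n+3).
Proof.
  intros Hs Hp. unfold mf. pose proof (pow2n_nonneg n p).
  assert (1 <= (1 + s * p ^ (2 * n))^2) by (rewrite <- (pow1 2); apply pow_incr; nra).
  assert (1 <= (1 + p ^ 2)^3) by (rewrite <- (pow1 3); apply pow_incr; nra).
  assert (0 <= p^(2*n+3)) by (apply pow_le; lra).
  assert (1 <= (1 + s * p ^ (2 * n)) ^ 2 * (1 + p ^ 2) ^ 3) by nra.
  apply Rmult_le_reg_r with ((1 + s * p ^ (2 * n)) ^ 2 * (1 + p ^ 2) ^ 3); [nra|].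
  unfold Rdiv. rewrite Rmult_assoc, Rinv_l by nra. nra.
Qed.

Lemma mf_le_large n mu p : (3 <= n)%nat -> 0 < mu -> 0 < p ->
  mf n (/ mu^(2*n)) p <= 4 * ((mu^(2*n))^2 * / p^(S (2*n-4))).
Proof.
  intros Hn Hmu Hp. unfold mf.
  set (t := mu^(2*n)). assert (Ht : 0 < t) by (apply pow_lt; lra).
  assert (Hxe : p^(2*n) = p^(S (2*n-4)) * p^3).
  { rewrite <- pow_add. f_equal. lia. }
  assert (Hp3 : p^(2*n+3) = p^(S (2*n-4)) * p^3 * p^3).
  { rewrite <- !pow_add. f_equal. lia. }
  assert (Hpk : 0 < p^(S (2*n-4))) by (apply pow_lt; lra).
  assert (Hp3' : 0 < p^3) by (apply pow_lt; lra).
  set (y := p^(S (2*n-4))) in *. set (z := p^3) in *.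
  rewrite Hp3, Hxe.
  assert (1 <= (1 + p ^ 2)^3) by (rewrite <- (pow1 3); apply pow_incr; nra).
  assert (Hsx : y * z / t <= 1 + / t * (y * z)).
  { assert (0 < / t) by (apply Rinv_0_lt_compat; lra).
    replace (y * z / t) with (/t * (y * z)) by (field; lra). nra. }
  assert (0 < y * z / t) by (apply Rdiv_lt_0_compat; nra).
  assert (HA : (y * z / t)^2 <= (1 + / t * (y * z))^2) by (apply pow_incr; lra).
  apply Rle_trans with (4 * (y * z * z) / ((y * z / t)^2 * 1)).
  - unfold Rdiv. apply Rmult_le_compat_l; [nra|]. apply Rinv_le_contravar; [nra|].
    apply Rmult_le_compat; nra.
  - right. field. lra.
Qed.

Lemma gf_nonneg n s p : 0 <= s -> 0 <= p -> 0 <= gf n s p.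
Proof. intros. unfold gf. apply Rmult_le_pos; auto. apply f0_nonneg; auto. Qed.

Lemma gf_le n mu b : (2 <= n)%nat -> 0 < mu -> 1 <= b ->
  gf n (/ mu^(2*n)) b <= (mu^(2*n))^2 / b.
Proof.
  intros Hn Hmu Hb. unfold gf.
  pose proof (f0_le_large n mu b ltac:(lia) Hmu ltac:(lra)).
  assert (0 < (mu^(2*n))^2) by (apply pow_lt, pow_lt; lra).
  apply Rle_trans with (b * ((mu ^ (2 * n)) ^ 2 * / b ^ S (2 * n - 2))).
  apply Rmult_le_compat_l; lra.
  replace (b * ((mu ^ (2 * n)) ^ 2 * / b ^ S (2 * n - 2))) with ((mu ^ (2 * n)) ^ 2 / b * (/ b^(2*n-3) * b ^ S (2*n-2) * / b ^ S (2 * n - 2))).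
  2:{ replace (S (2*n-2)) with (S (2*n-3) + 1)%nat by lia. rewrite pow_add. simpl pow.
      field. split; [lra|]. apply pow_nonzero; lra. }
  rewrite Rmult_assoc, Rinv_r, Rmult_1_r by (apply pow_nonzero; lra).
  assert (1 <= b^(2*n-3)) by (rewrite <- (pow1 (2*n-3)); apply pow_incr; lra).
  assert (0 < (mu ^ (2 * n)) ^ 2 / b) by (apply Rdiv_lt_0_compat; lra).
  assert (/ b^(2*n-3) <= 1) by (rewrite <- Rinv_1; apply Rinv_le_contravar; lra).
  assert (0 < / b^(2*n-3)) by (apply Rinv_0_lt_compat; lra).
  nra.
Qed.

Lemma ex_mf n s a b : 0 <= s -> ex_RInt (mf n s) a b.
Proof. intros Hs. apply ex_RInt_cont. intros p; apply mf_cont; auto. Qed.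
Lemma ex_kf n s a b : 0 <= s -> ex_RInt (kf n s) a b.
Proof. intros Hs. apply ex_RInt_cont. intros p; apply kf_cont; auto. Qed.

Lemma RInt_kf n s b : (1 <= n)%nat -> 0 <= s -> 0 <= b ->
  RInt (kf n s) 0 b = (gf n s b + RInt (mf n s) 0 b) / (2 * INR n).
Proof.
  intros Hn Hs Hb.
  assert (HnI : 0 < INR n) by (apply lt_0_INR; lia).
  assert (E : RInt (fun p => 2 * INR n * kf n s p - mf n s p) 0 b = gf n s b - gf n s 0).
  { apply is_RInt_unique.
    apply (is_RInt_derive (gf n s) (fun p => 2 * INR n * kf n s p - mf n s p)).
    - intros x _. apply gf_der; auto.
    - intros x _. apply (continuous_minus (V:=R_NormedModule)).
      apply (continuous_scal_r (K:=R_AbsRing) (V:=R_NormedModule) _ (kf n s)). apply kf_cont; auto.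
      apply mf_cont; auto. }
  assert (Ek : ex_RInt (kf n s) 0 b) by (apply ex_kf; lra).
  assert (Em : ex_RInt (mf n s) 0 b) by (apply ex_mf; lra).
  assert (Eks : ex_RInt (fun p => 2*INR n * kf n s p) 0 b) by (apply exR_scal; auto).
  rewrite (RIntR_minus (fun p => 2 * INR n * kf n s p) (mf n s) 0 b Eks Em) in E.
  rewrite (RIntR_scal (kf n s) 0 b (2*INR n) Ek) in E.
  assert (G0 : gf n s 0 = 0) by (unfold gf; ring).
  rewrite G0 in E.
  set (A := RInt (kf n s) 0 b) in *. set (B := RInt (mf n s) 0 b) in *.
  set (c := INR n) in *.
  replace (gf n s b + B) with (2 * c * A) by lra.
  unfold Rdiv. rewrite (Rmult_comm (2*c) A), Rmult_assoc, Rinv_r, Rmult_1_r; [reflexivity| lra].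
Qed.


Lemma kf_bound n mu : (3 <= n)%nat -> 0 < mu <= 1 ->
  0 <= / mu^(2*n) * I1 n (/ mu^(2*n)) + (1 + / INR n) * I0 n (/ mu^(2*n)) <=
  4 * mu^(S (2*n+3)) * (/ INR (S (2*n+3)) + / INR (2*n-4)) / (2 * INR n).
Proof.
  intros Hn Hmu.
  set (s := / mu^(2*n)).
  assert (Hs : 0 < s) by (apply Rinv_0_lt_compat, pow_lt; lra).
  assert (HnI : 0 < INR n) by (apply lt_0_INR; lia).
  destruct (I0_imp n _ Hs) as [H0 _]. destruct (I1_imp n _ Hs) as [H1 _].
  assert (Hk : imp (kf n s) (s * I1 n s + (1 + / INR n) * I0 n s)).
  { eapply imp_ext; [|apply imp_plus; [apply imp_scal; exact H1| apply imp_scal; exact H0]].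
    intros p. unfold kf. reflexivity. }
  assert (HkI : 0 < INR (2*n-4)) by (apply lt_0_INR; lia).
  assert (HmI : 0 < INR (S (2*n+3))) by (apply lt_0_INR; lia).
  split.
  - apply (imp_lower0 _ _ 0 Hk). intros b Hb. rewrite RInt_kf by (lia||lra).
    apply Rdiv_le_0_compat; [|lra]. apply Rplus_le_le_0_compat. apply gf_nonneg; lra.
    apply RInt_ge_0; auto. apply ex_mf; lra. intros x Hx; apply mf_nonneg; lra.
  - apply (imp_upper _ _ _ 1 ((mu^(2*n))^2 / (2 * INR n)) Hk); try lra.
    { apply Rdiv_le_0_compat; [apply pow_le, pow_le; lra| lra]. }
    intros b Hb. rewrite RInt_kf by (lia||lra).
    assert (Gb : gf n s b <= (mu^(2*n))^2 / b) by (apply gf_le; lia || lra).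
    assert (Mb : RInt (mf n s) 0 b <= 4 * mu^(S (2*n+3)) * (/ INR (S (2*n+3)) + / INR (2*n-4))).
    { rewrite <- (RIntR_Chasles _ 0 mu b) by (apply ex_mf; lra).
      assert (E1 : RInt (mf n s) 0 mu <= 4 * (mu^(S (2*n+3)) / INR (S (2*n+3)))).
      { replace (mu ^ S (2 * n + 3) / INR (S (2 * n + 3))) with ((mu ^ S (2 * n + 3) - 0 ^ S (2 * n + 3)) / INR (S (2 * n + 3))) by (replace (0 ^ S (2*n+3)) with 0 by (simpl; ring); unfold Rdiv; ring).
        rewrite <- RInt_pow by lra. rewrite <- RIntR_scal by apply ex_pow.
        apply RInt_le; try lra. apply ex_mf; lra. apply exR_scal, ex_pow.
        intros x Hx. apply mf_le_pow; lra. }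
      assert (E2 : RInt (mf n s) mu b <= 4 * (mu^(S (2*n+3)) / INR (2*n-4))).
      { apply Rle_trans with (RInt (fun p => 4 * ((mu^(2*n))^2 * / p^(S (2*n-4)))) mu b).
        - apply RInt_le; auto. lra. apply ex_mf; lra. apply exR_scal, exR_scal, ex_invpow; lra.
          intros x Hx. apply mf_le_large; lia || lra.
        - rewrite RIntR_scal by (apply exR_scal, ex_invpow; lra).
          rewrite RIntR_scal by (apply ex_invpow; lra).
          rewrite RInt_invpow by (lia || lra).
          replace (mu ^ S (2*n+3)) with ((mu^(2*n))^2 / mu^(2*n-4)).
          2:{ assert (mu^(2*n-4) <> 0) by (apply pow_nonzero; lra).
              replace ((mu ^ (2 * n)) ^ 2) with (mu^(2*n-4) * mu^(S (2*n+3))).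
              field; auto. rewrite <- pow_mult, <- pow_add. f_equal. lia. }
          assert (0 < / b ^ (2 * n - 4)) by (apply Rinv_0_lt_compat, pow_lt; lra).
          assert (0 < (mu ^ (2 * n)) ^ 2) by (apply pow_lt, pow_lt; lra).
          assert (0 < / mu ^ (2 * n - 4)) by (apply Rinv_0_lt_compat, pow_lt; lra).
          unfold Rdiv. assert (0 < / INR (2 * n - 4)) by (apply Rinv_0_lt_compat; lra).
          apply Rmult_le_compat_l; [lra|]. rewrite Rmult_assoc.
          apply Rmult_le_compat_l; [lra|]. apply Rmult_le_compat_r; lra. }
      unfold Rdiv in *. lra. }
    unfold Rdiv. rewrite Rmult_plus_distr_r.
    assert (0 < / (2 * INR n)) by (apply Rinv_0_lt_compat; lra).
    unfold Rdiv in Gb.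
    replace ((mu ^ (2 * n)) ^ 2 * / (2 * INR n) * / b) with ((mu ^ (2 * n)) ^ 2 * / b * / (2 * INR n)) by ring.
    assert (gf n s b * / (2 * INR n) <= (mu ^ (2 * n)) ^ 2 * / b * / (2 * INR n)) by (apply Rmult_le_compat_r; lra).
    assert (RInt (mf n s) 0 b * / (2 * INR n) <= 4 * mu ^ S (2 * n + 3) * (/ INR (S (2 * n + 3)) + / INR (2 * n - 4)) * / (2 * INR n)) by (apply Rmult_le_compat_r; lra).
    lra.
Qed.

Definition Fc n s := 32 * PI * I0 n s.
Definition Fc1 n s := 32 * PI * I1 n s.
Definition Fc2 n s := 32 * PI * I2 n s.

Lemma conf_eq n u v : conf n u v = Fc n (u^2 + v^2).
Proof. reflexivity. Qed.

Lemma f0_ge_gen n s p : 0 < s -> 0 <= p <= 1 -> / (4 * (1 + s)^2) * p^(2*n+1) <= f0 n s p.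
Proof.
  intros Hs Hp. unfold f0.
  assert (Hx : p^(2*n) <= 1) by (rewrite <- (pow1 (2*n)); apply pow_incr; lra).
  pose proof (pow2n_nonneg n p).
  assert (H1 : (1 + s * p ^ (2 * n)) ^ 2 <= (1 + s)^2) by (apply pow_incr; nra).
  assert (H2 : (1 + p ^ 2) ^ 2 <= 4).
  { assert (p^2 <= 1) by nra. set (a := p^2) in *. assert (0 <= a) by (unfold a; nra). nra. }
  assert (0 <= p^(2*n+1)) by (apply pow_le; lra).
  assert (0 < (1 + s * p ^ (2 * n)) ^ 2) by (apply pow_lt; nra).
  assert (0 < (1 + p ^ 2) ^ 2) by (apply pow_lt; nra).
  set (D := (1 + s * p ^ (2 * n)) ^ 2 * (1 + p ^ 2) ^ 2) in *.
  assert (0 < D) by (unfold D; nra).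
  assert (D <= 4 * (1 + s)^2) by (unfold D; nra).
  unfold Rdiv. rewrite Rmult_comm. apply Rmult_le_compat_l; auto.
  apply Rinv_le_contravar; auto.
Qed.

Lemma I0_pos n s : 0 < s -> 0 < I0 n s.
Proof.
  intros Hs. destruct (I0_imp n s Hs) as [Hi _].
  apply Rlt_le_trans with (RInt (f0 n s) 0 1).
  - apply Rlt_le_trans with (RInt (fun p => / (4 * (1 + s)^2) * p^(2*n+1)) 0 1).
    + rewrite RIntR_scal by apply ex_pow. rewrite RInt_pow by lra.
      rewrite pow1, pow_i by lia.
      apply Rmult_lt_0_compat. apply Rinv_0_lt_compat; apply Rmult_lt_0_compat; [lra| apply pow_lt; lra].
      apply Rdiv_lt_0_compat; [lra| apply lt_0_INR; lia].
    + apply RInt_le; try lra. apply exR_scal, ex_pow. apply ex_f0; lra.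
      intros x Hx; apply f0_ge_gen; lra.
  - apply imp_lower; auto. intros p Hp; apply f0_nonneg; lra. lra.
Qed.

Lemma Fc_pos n s : 0 < s -> 0 < Fc n s.
Proof. intros Hs. unfold Fc. pose proof (I0_pos n s Hs). pose proof PI_RGT_0. nra. Qed.

Lemma Fc_der n s : 0 < s -> is_derive (Fc n) s (Fc1 n s).
Proof.
  intros Hs. apply is_derive_Reals. unfold Fc, Fc1.
  apply (derivable_pt_lim_scal (I0 n) (32 * PI)). apply I0_der; auto.
Qed.

Lemma Fc1_der n s : 0 < s -> is_derive (Fc1 n) s (Fc2 n s).
Proof.
  intros Hs. apply is_derive_Reals. unfold Fc1, Fc2.
  apply (derivable_pt_lim_scal (I1 n) (32 * PI)). apply I1_der; auto.
Qed.

Lemma Der_eq f x l : derivable_pt_lim f x l -> Der f x = l.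
Proof.
  intros H. unfold Der. apply (uniqueness_limite f x); auto.
  apply epsilon_spec. exists l; auto.
Qed.

Lemma comp_u (F : R -> R) dF v u : is_derive F (u^2+v^2) dF ->
  is_derive (fun x => F (x^2+v^2)) u (2 * u * dF).
Proof.
  intros H.
  assert (Hg : is_derive (fun x => x^2 + v^2) u (2 * u)) by (auto_derive; auto; ring).
  pose proof (is_derive_comp F (fun x => x^2+v^2) u dF (2*u) H Hg) as Hc.
  exact Hc.
Qed.

Lemma comp_v (F : R -> R) dF u v : is_derive F (u^2+v^2) dF ->
  is_derive (fun y => F (u^2+y^2)) v (2 * v * dF).
Proof.
  intros H.
  assert (Hg : is_derive (fun y => u^2 + y^2) v (2 * v)) by (auto_derive; auto; ring).
  pose proof (is_derive_comp F (fun y => u^2+y^2) v dF (2*v) H Hg) as Hc.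
  exact Hc.
Qed.

Lemma dpl_loc (f g : R -> R) u l d : 0 < d -> (forall x, Rabs (x - u) < d -> f x = g x) ->
  derivable_pt_lim g u l -> derivable_pt_lim f u l.
Proof.
  intros Hd He Hg eps Heps. destruct (Hg eps Heps) as [del Hdel].
  assert (Hm : 0 < Rmin del d) by (apply Rmin_pos; [apply cond_pos|lra]).
  exists (mkposreal _ Hm). intros h Hh0 Hh. simpl in Hh.
  rewrite (He u), (He (u+h)).
  apply Hdel; auto. pose proof (Rmin_l del d); lra.
  replace (u + h - u) with h by ring. pose proof (Rmin_r del d); lra.
  replace (u - u) with 0 by ring. rewrite Rabs_R0; lra.
Qed.

Lemma nbhd_u u v : 0 < u^2 + v^2 -> exists d, 0 < d /\ forall x, Rabs (x - u) < d -> 0 < x^2 + v^2.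
Proof.
  intros H. destruct (Req_dec v 0) as [Hv|Hv].
  - subst v. assert (u <> 0) by (intro; subst; lra).
    exists (Rabs u). split. apply Rabs_pos_lt; auto.
    intros x Hx. assert (x <> 0).
    { intro; subst x. rewrite Rminus_0_l, Rabs_Ropp in Hx. lra. }
    assert (0 < x^2) by (simpl; rewrite Rmult_1_r; apply Rsqr_pos_lt; auto). nra.
  - exists 1. split; [lra|]. intros x _. assert (0 < v^2) by (simpl; nra). nra.
Qed.

Lemma nbhd_v u v : 0 < u^2 + v^2 -> exists d, 0 < d /\ forall y, Rabs (y - v) < d -> 0 < u^2 + y^2.
Proof.
  intros H. destruct (nbhd_u v u) as [d [Hd Hx]]; [lra|].
  exists d; split; auto. intros y Hy. specialize (Hx y Hy). lra.
Qed.

Definition H1 n s := Fc1 n s / Fc n s.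
Definition H2 n s := (Fc2 n s * Fc n s - Fc1 n s ^ 2) / Fc n s ^ 2.

Lemma lnFc_der n s : 0 < s -> is_derive (fun s => ln (Fc n s)) s (H1 n s).
Proof.
  intros Hs. pose proof (Fc_pos n s Hs). pose proof (Fc_der n s Hs).
  unfold H1. auto_derive. split; auto. exists (Fc1 n s); auto.
  replace (Derive (fun x => Fc n x) s) with (Fc1 n s) by (symmetry; apply is_derive_unique; auto). field. lra.
Qed.

Lemma H1_der n s : 0 < s -> is_derive (H1 n) s (H2 n s).
Proof.
  intros Hs. pose proof (Fc_pos n s Hs). pose proof (Fc_der n s Hs). pose proof (Fc1_der n s Hs).
  unfold H1, H2. auto_derive. repeat split; try lra. exists (Fc2 n s); auto. exists (Fc1 n s); auto.
  replace (Derive (fun x => Fc n x) s) with (Fc1 n s) by (symmetry; apply is_derive_unique; auto).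
  replace (Derive (fun x => Fc1 n x) s) with (Fc2 n s) by (symmetry; apply is_derive_unique; auto). field. lra.
Qed.

Lemma du_conf n u v : 0 < u^2 + v^2 -> d_u (conf n) u v = 2 * u * Fc1 n (u^2 + v^2).
Proof.
  intros Hs. unfold d_u. apply Der_eq. apply is_derive_Reals.
  change (fun s => conf n s v) with (fun x => Fc n (x^2 + v^2)).
  apply comp_u. apply Fc_der; auto.
Qed.

Lemma dv_conf n u v : 0 < u^2 + v^2 -> d_v (conf n) u v = 2 * v * Fc1 n (u^2 + v^2).
Proof.
  intros Hs. unfold d_v. apply Der_eq. apply is_derive_Reals.
  change (fun s => conf n u s) with (fun y => Fc n (u^2 + y^2)).
  apply comp_v. apply Fc_der; auto.
Qed.

Lemma du_ln n x v : 0 < x^2 + v^2 -> d_u (lnconf n) x v = 2 * x * H1 n (x^2 + v^2).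
Proof.
  intros Hs. unfold d_u. apply Der_eq. apply is_derive_Reals.
  change (fun s => lnconf n s v) with (fun y => (fun s => ln (Fc n s)) (y^2 + v^2)).
  apply comp_u. apply lnFc_der; auto.
Qed.

Lemma dv_ln n u y : 0 < u^2 + y^2 -> d_v (lnconf n) u y = 2 * y * H1 n (u^2 + y^2).
Proof.
  intros Hs. unfold d_v. apply Der_eq. apply is_derive_Reals.
  change (fun s => lnconf n u s) with (fun y => (fun s => ln (Fc n s)) (u^2 + y^2)).
  apply comp_v. apply lnFc_der; auto.
Qed.

Lemma duu_ln n u v : 0 < u^2 + v^2 ->
  d_u (d_u (lnconf n)) u v = 2 * H1 n (u^2+v^2) + 2 * u * (2 * u * H2 n (u^2+v^2)).
Proof.
  intros Hs.
  change (d_u (d_u (lnconf n)) u v) with (Der (fun x => d_u (lnconf n) x v) u).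
  apply Der_eq. destruct (nbhd_u u v Hs) as [d [Hd Hn]].
  apply (dpl_loc _ (fun x => 2 * x * H1 n (x^2 + v^2)) u _ d Hd).
  { intros x Hx. apply du_ln. auto. }
  apply is_derive_Reals.
  pose proof (comp_u (H1 n) (H2 n (u^2+v^2)) v u (H1_der n _ Hs)) as Hc.
  assert (Hl : is_derive (fun x => 2 * x) u 2) by (auto_derive; auto; ring).
  pose proof (is_derive_mult (fun x => 2 * x) (fun x => H1 n (x^2 + v^2)) u 2 _ Hl Hc) as Hm.
  exact (Hm Rmult_comm).
Qed.

Lemma dvv_ln n u v : 0 < u^2 + v^2 ->
  d_v (d_v (lnconf n)) u v = 2 * H1 n (u^2+v^2) + 2 * v * (2 * v * H2 n (u^2+v^2)).
Proof.
  intros Hs.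
  change (d_v (d_v (lnconf n)) u v) with (Der (fun y => d_v (lnconf n) u y) v).
  apply Der_eq. destruct (nbhd_v u v Hs) as [d [Hd Hn]].
  apply (dpl_loc _ (fun y => 2 * y * H1 n (u^2 + y^2)) v _ d Hd).
  { intros y Hy. apply dv_ln. auto. }
  apply is_derive_Reals.
  pose proof (comp_v (H1 n) (H2 n (u^2+v^2)) u v (H1_der n _ Hs)) as Hc.
  assert (Hl : is_derive (fun x => 2 * x) v 2) by (auto_derive; auto; ring).
  pose proof (is_derive_mult (fun x => 2 * x) (fun y => H1 n (u^2 + y^2)) v 2 _ Hl Hc) as Hm.
  exact (Hm Rmult_comm).
Qed.

Lemma gauss_eq n u v : 0 < u^2 + v^2 ->
  gauss_K n u v = - (4 * H1 n (u^2+v^2) + 4 * (u^2+v^2) * H2 n (u^2+v^2)) / (2 * Fc n (u^2+v^2)).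
Proof.
  intros Hs. unfold gauss_K. rewrite duu_ln, dvv_ln by auto. rewrite conf_eq.
  f_equal. ring.
Qed.

Lemma key_ineq a m F D E lam P cL CU CD :
  0 < a -> 0 < m <= 1 -> 0 < P -> 0 < cL -> 0 < CU -> 0 <= CD ->
  P * cL * (a * m) <= F <= P * CU * (a * m) -> 0 <= D <= P * CD * (a * (m * m)) ->
  2 * P * CU <= E -> 2 * lam^2 * CD^2 / (P * cL^3) <= E ->
  1 <= (E / (a * F) - lam^2 * D^2 / F^4) * (a^2 * m).
Proof.
  intros Ha Hm HP HcL HCU HCD [HF1 HF2] [HD1 HD2] HE1 HE2.
  assert (Ham : 0 < a * m) by nra.
  assert (HF : 0 < F) by (assert (0 < P * cL * (a * m)) by (repeat apply Rmult_lt_0_compat; lra); lra).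
  assert (HE : 0 < E) by nra.
  assert (S1 : D^2 <= (P * CD)^2 * a^2 * m^3).
  { assert (D^2 <= (P * CD * (a * (m * m)))^2) by (apply pow_incr; lra).
    assert ((P * CD * (a * (m * m)))^2 = (P*CD)^2 * a^2 * m^3 * m) by ring.
    assert (0 <= (P*CD)^2 * a^2 * m^3) by (apply Rmult_le_pos; [apply Rmult_le_pos|]; apply pow_le; nra).
    nra. }
  assert (S2 : (P * cL * (a * m))^3 <= F^3) by (apply pow_incr; split; [|lra]; left; repeat apply Rmult_lt_0_compat; lra).
  assert (S3 : 2 * lam^2 * CD^2 <= E * (P * cL^3)).
  { assert (0 < P * cL^3) by (apply Rmult_lt_0_compat; [|apply pow_lt]; lra).
    apply Rmult_le_compat_r with (r := P * cL^3) in HE2; [|lra].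
    unfold Rdiv in HE2. rewrite Rmult_assoc, Rinv_l, Rmult_1_r in HE2 by lra. lra. }
  assert (S4 : 2 * a * (lam^2 * D^2) <= E * F^3).
  { assert (0 <= lam^2) by (apply pow2_ge_0).
    apply Rle_trans with (2 * a * (lam^2 * ((P * CD)^2 * a^2 * m^3))).
    { apply Rmult_le_compat_l; [lra|]. apply Rmult_le_compat_l; auto. }
    apply Rle_trans with (E * (P * cL * (a * m))^3).
    2:{ apply Rmult_le_compat_l; lra. }
    replace (2 * a * (lam ^ 2 * ((P * CD) ^ 2 * a ^ 2 * m ^ 3))) with ((2 * lam^2 * CD^2) * (P^2 * a^3 * m^3)) by ring.
    replace (E * (P * cL * (a * m)) ^ 3) with ((E * (P * cL^3)) * (P^2 * a^3 * m^3)) by ring.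
    apply Rmult_le_compat_r; auto. apply Rmult_le_pos; [apply Rmult_le_pos|]; apply pow_le; nra. }
  assert (S5 : lam^2 * D^2 / F^4 <= E / (2 * a * F)).
  { assert (0 < F^4) by (apply pow_lt; lra).
    apply Rmult_le_reg_r with (2 * a * F * F^4); [repeat apply Rmult_lt_0_compat; lra|].
    replace (lam ^ 2 * D ^ 2 / F ^ 4 * (2 * a * F * F ^ 4)) with (2 * a * (lam^2 * D^2) * F) by (field; lra).
    replace (E / (2 * a * F) * (2 * a * F * F ^ 4)) with (E * F^3 * F) by (field; lra).
    apply Rmult_le_compat_r; lra. }
  assert (S6 : 2 * F <= E * (a * m)).
  { apply Rle_trans with (2 * (P * CU * (a * m))); [lra|].
    replace (2 * (P * CU * (a * m))) with ((2 * P * CU) * (a * m)) by ring.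
    apply Rmult_le_compat_r; lra. }
  apply Rle_trans with (E / (2 * a * F) * (a^2 * m)).
  - replace (E / (2 * a * F) * (a ^ 2 * m)) with (E * (a * m) / (2 * F)) by (field; lra).
    apply Rmult_le_reg_r with (2 * F); [lra|].
    replace (E * (a * m) / (2 * F) * (2 * F)) with (E * (a * m)) by (field; lra). lra.
  - apply Rmult_le_compat_r; [apply Rmult_le_pos; [apply pow_le|]; lra|].
    replace (E / (a * F)) with (2 * (E / (2 * a * F))) by (field; lra). lra.
Qed.

Lemma forward_pos (q s : R -> R) s0 :
  continuity q ->
  (forall t, derivable_pt_lim s t (2 * q t)) ->
  0 < q 0 -> s0 <= s 0 ->
  (forall t, s0 <= s t -> q t <> 0) ->
  forall t, 0 <= t -> 0 < q t.
Proof.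
  intros Hq Hs Hq0 Hs0 Hnz t1 Ht1.
  apply Rnot_le_lt; intro Hle.
  assert (Ht1p : 0 < t1) by (destruct (Req_dec t1 0); [subst; lra| lra]).
  set (S := fun tau => 0 <= tau <= t1 /\ forall r, 0 <= r <= tau -> 0 < q r).
  assert (HB : bound S) by (exists t1; intros x [Hx _]; lra).
  assert (HE : exists x, S x) by (exists 0; split; [lra|]; intros r Hr; replace r with 0 by lra; auto).
  destruct (completeness S HB HE) as [tau [Hub Hlub]].
  assert (Htau0 : 0 <= tau) by (apply Hub; split; [lra|]; intros r Hr; replace r with 0 by lra; auto).
  assert (Htau1 : tau <= t1) by (apply Hlub; intros x [Hx _]; lra).
  assert (HA : forall r, 0 <= r < tau -> 0 < q r).
  { intros r Hr. apply Classical_Prop.NNPP; intro Hn.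
    assert (tau <= r); [|lra].
    apply Hlub. intros x [Hx Hx2]. apply Rnot_lt_le; intro Hxr.
    apply Hn. apply Hx2. lra. }
  assert (HBs : s0 <= s tau).
  { destruct (Req_dec tau 0) as [E|E]; [rewrite E; auto|].
    destruct (MVT_cor2 s (fun t => 2 * q t) 0 tau) as [c [Hc1 Hc2]]; [lra| intros c _; apply Hs|].
    assert (0 < q c) by (apply HA; lra). nra. }
  assert (Hqt : 0 < q tau).
  { destruct (Rtotal_order (q tau) 0) as [Hlt|[Heq|Hgt]]; auto.
    - exfalso. destruct (Req_dec tau 0) as [E|E]; [rewrite E in Hlt; lra|].
      destruct (IVT (fun t => - q t) 0 tau) as [z [Hz1 Hz2]].
      + apply continuity_opp; auto.
      + lra.
      + lra.
      + lra.
      + destruct (Req_dec z tau) as [Ez|Ez]; [subst z; lra|].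
        assert (0 < q z) by (apply HA; lra). lra.
    - exfalso; apply (Hnz tau); auto. }
  assert (Htl : tau < t1).
  { destruct (Req_dec tau t1) as [E|E]; [subst; lra|lra]. }
  destruct (Hq tau (q tau) Hqt) as [d [Hd Hcd]].
  set (tau' := Rmin (tau + d/2) t1).
  assert (S tau').
  { split. unfold tau'. split; [apply Rmin_glb; lra| apply Rmin_r].
    intros r Hr. destruct (Rlt_le_dec r tau) as [Hrt|Hrt]; [apply HA; lra|].
    destruct (Req_dec r tau) as [Er|Er]; [subst; auto|].
    assert (Hdr : R_dist r tau < d).
    { unfold R_dist. pose proof (Rmin_l (tau + d/2) t1). unfold tau' in Hr.
      rewrite Rabs_right; lra. }
    specialize (Hcd r (conj (conj I (fun h => Er (eq_sym h))) Hdr)). simpl in Hcd. unfold R_dist in Hcd.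
    apply Rabs_def2 in Hcd. lra. }
  assert (Hle2 : tau' <= tau) by (apply Hub; auto).
  unfold tau' in Hle2. assert (tau < Rmin (tau + d/2) t1) by (apply Rmin_glb_lt; lra). lra.
Qed.

Lemma alg_E u v u1 v1 u2 v2 F F1 K lam : 0 < F ->
  u2 + (2 * u * F1 * u1 ^ 2 + 2 * (2 * v * F1) * u1 * v1 - 2 * u * F1 * v1 ^ 2) / (2 * F) = lam * K * (- v1) ->
  v2 + (2 * v * F1 * v1 ^ 2 + 2 * (2 * u * F1) * u1 * v1 - 2 * v * F1 * u1 ^ 2) / (2 * F) = lam * K * u1 ->
  F1 * (2 * u * u1 + 2 * v * v1) * (u1^2 + v1^2) + F * (2 * u1 * u2 + 2 * v1 * v2) = 0.
Proof.
  intros HF Hu Hv.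
  assert (Eu : u2 = lam * K * (- v1) - (2 * u * F1 * u1 ^ 2 + 2 * (2 * v * F1) * u1 * v1 - 2 * u * F1 * v1 ^ 2) / (2 * F)) by lra.
  assert (Ev : v2 = lam * K * u1 - (2 * v * F1 * v1 ^ 2 + 2 * (2 * u * F1) * u1 * v1 - 2 * v * F1 * u1 ^ 2) / (2 * F)) by lra.
  rewrite Eu, Ev. field. lra.
Qed.

Lemma alg_L u v u1 v1 u2 v2 F F1 G1 G2 lam : 0 < F ->
  u2 + (2 * u * F1 * u1 ^ 2 + 2 * (2 * v * F1) * u1 * v1 - 2 * u * F1 * v1 ^ 2) / (2 * F) =
    lam * (- (4 * G1 + 4 * (u^2+v^2) * G2) / (2 * F)) * (- v1) ->
  v2 + (2 * v * F1 * v1 ^ 2 + 2 * (2 * u * F1) * u1 * v1 - 2 * v * F1 * u1 ^ 2) / (2 * F) =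
    lam * (- (4 * G1 + 4 * (u^2+v^2) * G2) / (2 * F)) * u1 ->
  F1 * (2 * u * u1 + 2 * v * v1) * (u * v1 - v * u1) + F * (u1 * v1 + u * v2 - (v1 * u1 + v * u2))
  + lam * ((2 * u * u1 + 2 * v * v1) * G1 + (u^2 + v^2) * (G2 * (2 * u * u1 + 2 * v * v1))) = 0.
Proof.
  intros HF Hu Hv.
  set (K := - (4 * G1 + 4 * (u^2+v^2) * G2) / (2 * F)) in *.
  assert (Eu : u2 = lam * K * (- v1) - (2 * u * F1 * u1 ^ 2 + 2 * (2 * v * F1) * u1 * v1 - 2 * u * F1 * v1 ^ 2) / (2 * F)) by lra.
  assert (Ev : v2 = lam * K * u1 - (2 * v * F1 * v1 ^ 2 + 2 * (2 * u * F1) * u1 * v1 - 2 * v * F1 * u1 ^ 2) / (2 * F)) by lra.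
  rewrite Eu, Ev. unfold K. field. lra.
Qed.

Lemma const_zero (f : R -> R) : (forall t, derivable_pt_lim f t 0) -> forall t, 0 <= t -> f t = f 0.
Proof.
  intros H t Ht. destruct (Req_dec t 0) as [E|E]; [subst; auto|].
  destruct (MVT_cor2 f (fun _ => 0) 0 t) as [c [Hc _]]; [lra| intros; apply H|]. lra.
Qed.

Lemma exp_pow a k : exp a ^ k = exp (INR k * a).
Proof.
  induction k. simpl. rewrite Rmult_0_l, exp_0. auto.
  rewrite S_INR. simpl. rewrite IHk, <- exp_plus. f_equal. ring.
Qed.

Definition muf (n : nat) (s : R) := exp (- ln s / INR (2 * n)).

Lemma muf_pow n s : (1 <= n)%nat -> 0 < s -> muf n s ^ (2 * n) = / s.
Proof.
  intros Hn Hs. unfold muf. rewrite exp_pow.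
  replace (INR (2 * n) * (- ln s / INR (2 * n))) with (- ln s).
  rewrite <- ln_Rinv by auto. apply exp_ln. apply Rinv_0_lt_compat; auto.
  field. apply not_0_INR; lia.
Qed.

Lemma muf_le1 n s : (1 <= n)%nat -> 1 <= s -> 0 < muf n s <= 1.
Proof.
  intros Hn Hs. unfold muf. split; [apply exp_pos|].
  assert (0 <= ln s).
  { destruct (Req_dec s 1) as [E|E]; [subst; rewrite ln_1; lra|].
    rewrite <- ln_1. left. apply ln_increasing; lra. }
  assert (0 < INR (2 * n)) by (apply lt_0_INR; lia).
  assert (- ln s / INR (2 * n) <= 0).
  { unfold Rdiv. assert (0 < / INR (2*n)) by (apply Rinv_0_lt_compat; lra). nra. }
  destruct (Req_dec (- ln s / INR (2 * n)) 0) as [E|E].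
  - rewrite E, exp_0; lra.
  - left. rewrite <- exp_0. apply exp_increasing. lra.
Qed.

Lemma muf_der n (s : R -> R) t ds : (1 <= n)%nat -> 0 < s t -> derivable_pt_lim s t ds ->
  derivable_pt_lim (fun t => muf n (s t)) t (muf n (s t) * (- (ds / s t) / INR (2 * n))).
Proof.
  intros Hn Hs Hd. apply is_derive_Reals in Hd. apply is_derive_Reals.
  unfold muf. auto_derive.
  - change (n + (n + 0))%nat with (2 * n)%nat. repeat split; try lra. exists ds; auto. 
  - change (n + (n + 0))%nat with (2 * n)%nat.
    replace (Derive (fun x => s x) t) with ds by (symmetry; apply is_derive_unique; auto).
    unfold Rdiv. field. split; [apply not_0_INR; lia| lra].
Qed.

Section Main.
Variable n : nat.
Variable lam : R.
Hypothesis Hn : (5 <= n)%nat.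
Variables u v u1 v1 u2 v2 : R -> R.
Hypothesis Hnz : forall t, u t <> 0 \/ v t <> 0.
Hypothesis Hd : forall t, derivable_pt_lim u t (u1 t) /\ derivable_pt_lim v t (v1 t) /\
               derivable_pt_lim u1 t (u2 t) /\ derivable_pt_lim v1 t (v2 t).
Hypothesis Hode : forall t, RMG_eq n lam (u t) (v t) (u1 t) (v1 t) (u2 t) (v2 t).

Definition ss t := u t ^ 2 + v t ^ 2.
Definition qq t := u t * u1 t + v t * v1 t.
Definition EE t := Fc n (ss t) * (u1 t ^ 2 + v1 t ^ 2).
Definition LL t := Fc n (ss t) * (u t * v1 t - v t * u1 t) + lam * (ss t * H1 n (ss t)).

Lemma ss_pos t : 0 < ss t.
Proof.
  unfold ss. destruct (Hnz t) as [H|H].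
  - assert (0 < u t ^ 2) by (simpl; rewrite Rmult_1_r; apply Rsqr_pos_lt; auto).
    assert (0 <= v t ^ 2) by apply pow2_ge_0. lra.
  - assert (0 < v t ^ 2) by (simpl; rewrite Rmult_1_r; apply Rsqr_pos_lt; auto).
    assert (0 <= u t ^ 2) by apply pow2_ge_0. lra.
Qed.

Lemma Du t : is_derive u t (u1 t). Proof. apply is_derive_Reals, Hd. Qed.
Lemma Dv t : is_derive v t (v1 t). Proof. apply is_derive_Reals, Hd. Qed.
Lemma Du1 t : is_derive u1 t (u2 t). Proof. apply is_derive_Reals, Hd. Qed.
Lemma Dv1 t : is_derive v1 t (v2 t). Proof. apply is_derive_Reals, Hd. Qed.

Lemma ode_u t : u2 t + (2 * u t * Fc1 n (ss t) * u1 t ^ 2 + 2 * (2 * v t * Fc1 n (ss t)) * u1 t * v1 t - 2 * u t * Fc1 n (ss t) * v1 t ^ 2) / (2 * Fc n (ss t)) =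
    lam * (- (4 * H1 n (u t ^ 2 + v t ^ 2) + 4 * (u t ^ 2 + v t ^ 2) * H2 n (u t ^ 2 + v t ^ 2)) / (2 * Fc n (u t ^ 2 + v t ^ 2))) * (- v1 t).
Proof.
  destruct (Hode t) as [H _]. unfold cov_acc_u in H.
  pose proof (ss_pos t) as Hs. unfold ss in *.
  rewrite du_conf, dv_conf, conf_eq, gauss_eq in H by auto. exact H.
Qed.

Lemma ode_v t : v2 t + (2 * v t * Fc1 n (ss t) * v1 t ^ 2 + 2 * (2 * u t * Fc1 n (ss t)) * u1 t * v1 t - 2 * v t * Fc1 n (ss t) * u1 t ^ 2) / (2 * Fc n (ss t)) =
    lam * (- (4 * H1 n (u t ^ 2 + v t ^ 2) + 4 * (u t ^ 2 + v t ^ 2) * H2 n (u t ^ 2 + v t ^ 2)) / (2 * Fc n (u t ^ 2 + v t ^ 2))) * u1 t.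
Proof.
  destruct (Hode t) as [_ H]. unfold cov_acc_v in H.
  pose proof (ss_pos t) as Hs. unfold ss in *.
  rewrite du_conf, dv_conf, conf_eq, gauss_eq in H by auto. exact H.
Qed.

Lemma EE_der t : derivable_pt_lim EE t 0.
Proof.
  apply is_derive_Reals. unfold EE, ss.
  pose proof (ss_pos t) as Hs. unfold ss in Hs.
  pose proof (Fc_der n _ Hs) as HF.
  pose proof (Fc_pos n _ Hs) as HFp.
  auto_derive.
  - change (u t * (u t * 1) + v t * (v t * 1)) with (u t ^ 2 + v t ^ 2).
    repeat split. exists (Fc1 n (u t ^ 2 + v t ^ 2)); auto.
    exists (u1 t); apply Du. exists (v1 t); apply Dv. exists (u2 t); apply Du1. exists (v2 t); apply Dv1.
  - change (u t * (u t * 1) + v t * (v t * 1)) with (u t ^ 2 + v t ^ 2).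
    replace (Derive (fun x => Fc n x) (u t ^ 2 + v t ^ 2)) with (Fc1 n (u t ^ 2 + v t ^ 2)) by (symmetry; apply is_derive_unique; auto).
    replace (Derive (fun x => u x) t) with (u1 t) by (symmetry; apply is_derive_unique; apply Du).
    replace (Derive (fun x => v x) t) with (v1 t) by (symmetry; apply is_derive_unique; apply Dv).
    replace (Derive (fun x => u1 x) t) with (u2 t) by (symmetry; apply is_derive_unique; apply Du1).
    replace (Derive (fun x => v1 x) t) with (v2 t) by (symmetry; apply is_derive_unique; apply Dv1).
    pose proof (alg_E (u t) (v t) (u1 t) (v1 t) (u2 t) (v2 t) (Fc n (ss t)) (Fc1 n (ss t))
      (- (4 * H1 n (u t ^ 2 + v t ^ 2) + 4 * (u t ^ 2 + v t ^ 2) * H2 n (u t ^ 2 + v t ^ 2)) / (2 * Fc n (u t ^ 2 + v t ^ 2))) lam HFp (ode_u t) (ode_v t)) as A.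
    unfold ss in A. rewrite <- A. ring.
Qed.

Lemma LL_der t : derivable_pt_lim LL t 0.
Proof.
  apply is_derive_Reals. unfold LL, ss.
  pose proof (ss_pos t) as Hs. unfold ss in Hs.
  pose proof (Fc_der n _ Hs) as HF.
  pose proof (H1_der n _ Hs) as HH.
  pose proof (Fc_pos n _ Hs) as HFp.
  auto_derive.
  - change (u t * (u t * 1) + v t * (v t * 1)) with (u t ^ 2 + v t ^ 2).
    repeat split; first [exists (Fc1 n (u t^2+v t^2)); exact HF | exists (H2 n (u t^2+v t^2)); exact HH | exists (u1 t); apply Du | exists (v1 t); apply Dv | exists (u2 t); apply Du1 | exists (v2 t); apply Dv1].
  - change (u t * (u t * 1) + v t * (v t * 1)) with (u t ^ 2 + v t ^ 2).
    replace (Derive (fun x => Fc n x) (u t ^ 2 + v t ^ 2)) with (Fc1 n (u t ^ 2 + v t ^ 2)) by (symmetry; apply is_derive_unique; auto).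
    replace (Derive (fun x => H1 n x) (u t ^ 2 + v t ^ 2)) with (H2 n (u t ^ 2 + v t ^ 2)) by (symmetry; apply is_derive_unique; auto).
    replace (Derive (fun x => u x) t) with (u1 t) by (symmetry; apply is_derive_unique; apply Du).
    replace (Derive (fun x => v x) t) with (v1 t) by (symmetry; apply is_derive_unique; apply Dv).
    replace (Derive (fun x => u1 x) t) with (u2 t) by (symmetry; apply is_derive_unique; apply Du1).
    replace (Derive (fun x => v1 x) t) with (v2 t) by (symmetry; apply is_derive_unique; apply Dv1).
    pose proof (alg_L (u t) (v t) (u1 t) (v1 t) (u2 t) (v2 t) (Fc n (ss t)) (Fc1 n (ss t))
      (H1 n (u t ^ 2 + v t ^ 2)) (H2 n (u t ^ 2 + v t ^ 2)) lam HFp (ode_u t) (ode_v t)) as A.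
    unfold ss in A. rewrite <- A. ring.
Qed.


Definition PP := 32 * PI.
Definition cL := / 16 * / INR (S (2 * n + 1)).
Definition CU := / INR (S (2 * n + 1)) + / INR (2 * n - 2).
Definition CD := 4 * (/ INR (S (2 * n + 3)) + / INR (2 * n - 4)) / (2 * INR n).
Definition Emin := 2 * PP * CU + 2 * lam ^ 2 * CD ^ 2 / (PP * cL ^ 3).

Lemma consts_pos : 0 < PP /\ 0 < cL /\ 0 < CU /\ 0 <= CD.
Proof.
  pose proof PI_RGT_0.
  assert (0 < INR (S (2*n+1))) by (apply lt_0_INR; lia).
  assert (0 < INR (S (2*n+3))) by (apply lt_0_INR; lia).
  assert (0 < INR (2*n-2)) by (apply lt_0_INR; lia).
  assert (0 < INR (2*n-4)) by (apply lt_0_INR; lia).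
  assert (0 < INR n) by (apply lt_0_INR; lia).
  unfold PP, cL, CU, CD. repeat split.
  - lra.
  - apply Rmult_lt_0_compat; apply Rinv_0_lt_compat; lra.
  - assert (0 < / INR (S (2 * n + 1))) by (apply Rinv_0_lt_compat; lra).
    assert (0 < / INR (2 * n - 2)) by (apply Rinv_0_lt_compat; lra). lra.
  - assert (0 < / INR (S (2 * n + 3))) by (apply Rinv_0_lt_compat; lra).
    assert (0 < / INR (2 * n - 4)) by (apply Rinv_0_lt_compat; lra).
    left. apply Rdiv_lt_0_compat; lra.
Qed.

Lemma q_bound t E0 L0 : 1 <= ss t -> EE t = E0 -> LL t = L0 -> L0 = - lam * (1 + / INR n) -> Emin <= E0 ->
  1 <= qq t ^ 2 * ((muf n (ss t)) ^ (2 * n)) ^ 2 * (muf n (ss t)) ^ 2.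
Proof.
  intros Hs1 HE HL HL0 HEm.
  destruct consts_pos as [HP [HcL [HCU HCD]]].
  pose proof (ss_pos t) as Hs.
  set (mu := muf n (ss t)).
  destruct (muf_le1 n (ss t) ltac:(lia) Hs1) as [Hmu0 Hmu1]. fold mu in Hmu0, Hmu1.
  assert (Ha : mu ^ (2 * n) = / ss t) by (apply muf_pow; lia || lra).
  set (a := mu ^ (2 * n)) in *.
  assert (Hsa : ss t = / a) by (rewrite Ha, Rinv_inv; auto).
  assert (Ha0 : 0 < a) by (rewrite Ha; apply Rinv_0_lt_compat; auto).
  set (m := mu ^ 2).
  assert (Hm : 0 < m <= 1) by (unfold m; split; [apply pow_lt; lra| rewrite <- (pow1 2); apply pow_incr; lra]).
  assert (Hp1 : mu ^ S (2 * n + 1) = a * m) by (unfold a, m; rewrite <- pow_add; f_equal; lia).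
  assert (Hp3 : mu ^ S (2 * n + 3) = a * (m * m)) by (unfold a, m; rewrite <- !pow_add; f_equal; lia).
  set (F := Fc n (ss t)).
  assert (HFp : 0 < F) by (apply Fc_pos; auto).
  assert (HFI : F = PP * I0 n (/ mu ^ (2 * n))) by (unfold F, Fc, PP; fold a; rewrite <- Hsa; auto).
  pose proof (I0_lower n mu ltac:(lia) (conj Hmu0 Hmu1)) as Hlo.
  pose proof (I0_upper n mu ltac:(lia) (conj Hmu0 Hmu1)) as Hup.
  pose proof (kf_bound n mu ltac:(lia) (conj Hmu0 Hmu1)) as Hkf.
  fold a in Hlo, Hup, Hkf. rewrite Hp1 in Hlo, Hup. rewrite Hp3 in Hkf. rewrite <- Hsa in Hlo, Hup, Hkf.
  set (D := ss t * Fc1 n (ss t) + (1 + / INR n) * F).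
  assert (HD : D = PP * (ss t * I1 n (ss t) + (1 + / INR n) * I0 n (ss t))) by (unfold D, F, Fc, Fc1, PP; ring).
  assert (HFb : PP * cL * (a * m) <= F <= PP * CU * (a * m)).
  { rewrite HFI. fold a. rewrite <- Hsa. unfold cL, CU. split.
    - replace (PP * (/ 16 * / INR (S (2 * n + 1))) * (a * m)) with (PP * (/ 16 * (a * m / INR (S (2 * n + 1))))) by (unfold Rdiv; ring).
      apply Rmult_le_compat_l; lra.
    - replace (PP * (/ INR (S (2 * n + 1)) + / INR (2 * n - 2)) * (a * m)) with (PP * ((a * m) * (/ INR (S (2 * n + 1)) + / INR (2 * n - 2)))) by ring.
      apply Rmult_le_compat_l; lra. }
  assert (HDb : 0 <= D <= PP * CD * (a * (m * m))).
  { rewrite HD. unfold CD. destruct Hkf as [Hk1 Hk2]. split.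
    - apply Rmult_le_pos; lra.
    - replace (PP * (4 * (/ INR (S (2 * n + 3)) + / INR (2 * n - 4)) / (2 * INR n)) * (a * (m * m)))
        with (PP * (4 * (a * (m * m)) * (/ INR (S (2 * n + 3)) + / INR (2 * n - 4)) / (2 * INR n))) by (unfold Rdiv; ring).
      apply Rmult_le_compat_l; lra. }
  assert (HE2 : 2 * PP * CU <= E0).
  { assert (0 <= 2 * lam ^ 2 * CD ^ 2 / (PP * cL ^ 3)).
    { apply Rdiv_le_0_compat. apply Rmult_le_pos; [apply Rmult_le_pos; [lra| apply pow2_ge_0]| apply pow_le; lra].
      apply Rmult_lt_0_compat; [lra| apply pow_lt; lra]. }
    unfold Emin in HEm. lra. }
  assert (HE3 : 2 * lam ^ 2 * CD ^ 2 / (PP * cL ^ 3) <= E0) by (assert (0 <= 2 * PP * CU) by nra; unfold Emin in HEm; lra).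
  pose proof (key_ineq a m F D E0 lam PP cL CU CD Ha0 Hm HP HcL HCU HCD HFb HDb HE2 HE3) as K.
  assert (Hq : qq t ^ 2 = E0 / (a * F) - lam ^ 2 * D ^ 2 / F ^ 4).
  { unfold EE, LL in HE, HL. fold F in HE, HL.
    assert (Hw : u t * v1 t - v t * u1 t = - lam * D / F ^ 2).
    { unfold D. unfold H1 in HL. fold F in HL. rewrite HL0 in HL.
      apply Rmult_eq_reg_l with F; [|lra].
      replace (F * (- lam * (ss t * Fc1 n (ss t) + (1 + / INR n) * F) / F ^ 2)) with (- lam * (ss t * Fc1 n (ss t) / F + (1 + / INR n))) by (field; split; [apply not_0_INR; lia| lra]).
      assert (E : F * (u t * v1 t - v t * u1 t) = - lam * (1 + / INR n) - lam * (ss t * (Fc1 n (ss t) / F))) by lra.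
      rewrite E. unfold Rdiv. ring. }
    assert (Hid : ss t * (u1 t ^ 2 + v1 t ^ 2) = qq t ^ 2 + (u t * v1 t - v t * u1 t) ^ 2) by (unfold ss, qq; ring).
    rewrite Hw in Hid.
    assert (Hu : u1 t ^ 2 + v1 t ^ 2 = E0 / F) by (rewrite <- HE; field; lra).
    rewrite Hu, Hsa in Hid.
    replace (qq t ^ 2) with (/ a * (E0 / F) - (- lam * D / F ^ 2) ^ 2) by lra.
    field. split; lra. }
  rewrite Hq. fold m. replace ((E0 / (a * F) - lam ^ 2 * D ^ 2 / F ^ 4) * a ^ 2 * m) with ((E0 / (a * F) - lam ^ 2 * D ^ 2 / F ^ 4) * (a ^ 2 * m)) by ring.
  exact K.
Qed.

Lemma const_all (f : R -> R) : (forall t, derivable_pt_lim f t 0) -> forall t, f t = f 0.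
Proof.
  intros H t. destruct (Rtotal_order t 0) as [Hl|[He|Hg]].
  - destruct (MVT_cor2 f (fun _ => 0) t 0) as [c [Hc _]]; [lra| intros; apply H|]. lra.
  - subst; auto.
  - destruct (MVT_cor2 f (fun _ => 0) 0 t) as [c [Hc _]]; [lra| intros; apply H|]. lra.
Qed.

Lemma no_global V vy : u 0 = 1 -> v 0 = 0 -> u1 0 = V -> v1 0 = vy -> 0 < V ->
  LL 0 = - lam * (1 + / INR n) -> Emin <= EE 0 -> False.
Proof.
  intros Hu0 Hv0 Hu10 Hv10 HV HL0 HE0.
  assert (HE : forall t, EE t = EE 0) by (apply const_all; apply EE_der).
  assert (HL : forall t, LL t = LL 0) by (apply const_all; apply LL_der).
  assert (HQ : forall t, 1 <= ss t -> 1 <= qq t ^ 2 * ((muf n (ss t)) ^ (2 * n)) ^ 2 * (muf n (ss t)) ^ 2).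
  { intros t Ht. apply (q_bound t (EE 0) (LL 0)); auto. }
  assert (Hss0 : ss 0 = 1) by (unfold ss; rewrite Hu0, Hv0; ring).
  assert (Hqq0 : qq 0 = V) by (unfold qq; rewrite Hu0, Hv0, Hu10; ring).
  assert (Hcq : continuity qq).
  { intros t. unfold qq.
    destruct (Hd t) as [A [B [C D]]].
    pose proof (derivable_continuous_pt u t (exist _ (u1 t) A)).
    pose proof (derivable_continuous_pt v t (exist _ (v1 t) B)).
    pose proof (derivable_continuous_pt u1 t (exist _ (u2 t) C)).
    pose proof (derivable_continuous_pt v1 t (exist _ (v2 t) D)).
    apply (continuity_pt_plus (fun t => u t * u1 t) (fun t => v t * v1 t)); apply continuity_pt_mult; auto. }
  assert (Hds : forall t, derivable_pt_lim ss t (2 * qq t)).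
  { intros t. apply is_derive_Reals. unfold ss, qq.
    pose proof (Du t). pose proof (Dv t).
    auto_derive.
    - repeat split; first [exists (u1 t); assumption | exists (v1 t); assumption].
    - replace (Derive (fun x => u x) t) with (u1 t) by (symmetry; apply is_derive_unique; auto).
      replace (Derive (fun x => v x) t) with (v1 t) by (symmetry; apply is_derive_unique; auto).
      ring. }
  assert (Hpos : forall t, 0 <= t -> 0 < qq t).
  { apply (forward_pos qq ss 1 Hcq Hds); [lra|lra|].
    intros t Ht Hq0. specialize (HQ t Ht). rewrite Hq0 in HQ. simpl in HQ. lra. }
  assert (Hs1 : forall t, 0 <= t -> 1 <= ss t).
  { intros t Ht. destruct (Req_dec t 0) as [E|E]; [subst; lra|].
    destruct (MVT_cor2 ss (fun t => 2 * qq t) 0 t) as [c [Hc1 Hc2]]; [lra| intros c _; apply Hds|].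
    assert (0 < qq c) by (apply Hpos; lra). nra. }
  assert (HnI : 0 < INR n) by (apply lt_0_INR; lia).
  set (mu := fun t => muf n (ss t)).
  assert (Hmud : forall t, derivable_pt_lim mu t (muf n (ss t) * (- (2 * qq t / ss t) / INR (2 * n)))).
  { intros t. apply muf_der; [lia| apply ss_pos| apply Hds]. }
  assert (Hmud_le : forall t, 0 <= t -> muf n (ss t) * (- (2 * qq t / ss t) / INR (2 * n)) <= - / INR n).
  { intros t Ht.
    pose proof (HQ t (Hs1 t Ht)) as Hq.
    pose proof (ss_pos t) as Hs.
    assert (Ha : muf n (ss t) ^ (2 * n) = / ss t) by (apply muf_pow; [lia| auto]).
    rewrite Ha in Hq.
    assert (Hm : 0 < muf n (ss t)) by (unfold muf; apply exp_pos).
    pose proof (Hpos t Ht) as Hqp.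
    set (x := qq t * / ss t * muf n (ss t)).
    assert (Hx0 : 0 < x) by (unfold x; apply Rmult_lt_0_compat; [apply Rmult_lt_0_compat; [|apply Rinv_0_lt_compat]|]; auto).
    assert (Hx2 : 1 <= x ^ 2) by (unfold x; replace ((qq t * / ss t * muf n (ss t)) ^ 2) with (qq t ^ 2 * (/ ss t) ^ 2 * muf n (ss t) ^ 2) by ring; auto).
    assert (Hx : 1 <= x) by nra.
    replace (muf n (ss t) * (- (2 * qq t / ss t) / INR (2 * n))) with (- x / INR n).
    2:{ unfold x. rewrite mult_INR. simpl INR. field. split; lra. }
    assert (0 < / INR n) by (apply Rinv_0_lt_compat; auto). unfold Rdiv. nra. }
  destruct (MVT_cor2 mu (fun t => muf n (ss t) * (- (2 * qq t / ss t) / INR (2 * n))) 0 (INR n)) as [c [Hc1 Hc2]].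
  { auto. }
  { intros c _. apply Hmud. }
  assert (Hmu0 : mu 0 = 1).
  { change (mu 0) with (muf n (ss 0)). unfold muf. rewrite Hss0, ln_1. replace (- 0 / INR (2 * n)) with 0 by (field; apply not_0_INR; lia). apply exp_0. }
  assert (HmuT : 0 < mu (INR n)) by (change (mu (INR n)) with (muf n (ss (INR n))); unfold muf; apply exp_pos).
  specialize (Hmud_le c ltac:(lra)).
  replace (INR n - 0) with (INR n) in Hc1 by ring.
  assert (Hf : (muf n (ss c) * (- (2 * qq c / ss c) / INR (2 * n))) * INR n <= - / INR n * INR n).
  { apply Rmult_le_compat_r; lra. }
  replace (- / INR n * INR n) with (-1) in Hf by (field; lra). lra.
Qed.

End Main.

Theorem corollary4p6 (n : nat) (lam : R) (Hn : (5 <= n)%nat) :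
  exists x0 y0 vx vy : R,
    (x0 <> 0 \/ y0 <> 0) /\ ~ global_RMG_curve n lam x0 y0 vx vy.
Proof.
  assert (HF1 : 0 < Fc n 1) by (apply Fc_pos; lra).
  set (F1 := Fc n 1) in *.
  set (vy := (- lam * (1 + / INR n) - lam * H1 n 1) / F1).
  destruct (consts_pos n Hn) as [HP [HcL [HCU HCD]]].
  assert (HEm : 0 <= Emin n lam).
  { unfold Emin. assert (0 <= 2 * lam ^ 2 * CD n ^ 2 / (PP * cL n ^ 3)).
    { apply Rdiv_le_0_compat. apply Rmult_le_pos; [apply Rmult_le_pos; [lra| apply pow2_ge_0]| apply pow_le; lra].
      apply Rmult_lt_0_compat; [lra| apply pow_lt; lra]. }
    nra. }
  set (V := Emin n lam / F1 + 1).
  assert (HV : 1 <= V) by (unfold V; assert (0 <= Emin n lam / F1) by (apply Rdiv_le_0_compat; lra); lra).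
  exists 1, 0, V, vy. split; [left; lra|].
  intros [u [v [u1 [v1 [u2 [v2 [H0 [H1' [H2 [H3 [Hnz [Hd Hode]]]]]]]]]]]].
  apply (no_global n lam Hn u v u1 v1 u2 v2 Hnz Hd Hode V vy); auto; try lra.
  - unfold LL, ss. rewrite H0, H1', H2, H3.
    replace (1 ^ 2 + 0 ^ 2) with 1 by ring. fold F1. unfold vy. field. repeat split; try lra; apply not_0_INR; lia.
  - unfold EE, ss. rewrite H0, H1', H2, H3.
    replace (1 ^ 2 + 0 ^ 2) with 1 by ring. fold F1.
    assert (F1 * V = Emin n lam + F1) by (unfold V; field; lra).
    assert (V <= V ^ 2) by nra.
    assert (0 <= vy ^ 2) by apply pow2_ge_0.
    nra.
Qed.
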